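(* For any smooth complex-valued potential $V$, the number $k_2:=\dim\big(\mathfrak g^{\mathrm{ess}}_V\cap\langle G(\chi),\sigma M,\rho I\rangle\big)-2$ belongs to $\{0,2\}$, where the span is over all smooth real functions $\chi,\sigma,\rho$ of $t$.
   Context: $\mathfrak g_V$ is the maximal Lie invariance algebra of $i\psi_t+\psi_{xx}+V(t,x)\psi=0$ ($\psi$ complex of real $t,x$; vector fields on $(t,x,\psi,\psi^* )$, $\psi^*$ an additional dependent variable), considered locally. With $M=i\psi\partial_\psi-i\psi^*\partial_{\psi^*}$, $I=\psi\partial_\psi+\psi^*\partial_{\psi^*}$, $D(\tau)=\tau\partial_t+\frac12\tau_tx\partial_x+\frac18\tau_{tt}x^2M$, $G(\chi)=\chi\partial_x+\frac12\chi_txM$, set $\mathfrak g^{\mathrm{ess}}_V:=\mathfrak g_V\cap\langle D(\tau),G(\chi),\sigma(t)M,\rho(t)I\rangle$ (span over all smooth real $\tau,\chi,\sigma,\rho$ of $t$); $\sigma M$, $\rho I$ mean $\sigma(t)M$, $\rho(t)I$. *)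

(* Defs.v *)
From Stdlib Require Import Reals List.
Import ListNotations.
From Coquelicot Require Import Coquelicot.
Open Scope R_scope.

Definition dt (f : R -> R -> R) : R -> R -> R :=
  fun t x => Derive (fun s => f s x) t.
Definition dx (f : R -> R -> R) : R -> R -> R :=
  fun t x => Derive (fun y => f t y) x.

(** iterated partial derivative along a word of directions (true = t, false = x) *)
Fixpoint pd (l : list bool) (f : R -> R -> R) : R -> R -> R :=
  match l with
  | nil => f
  | true :: l' => dt (pd l' f)
  | false :: l' => dx (pd l' f)
  end.

Definition smooth2 (f : R -> R -> R) : Prop :=
  forall l : list bool,
    (forall t x, ex_derive (fun s => pd l f s x) t /\ ex_derive (fun y => pd l f t y) x) /\
    (forall t x, continuous (fun p : R * R => pd l f (fst p) (snd p)) (t, x)).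

Definition smooth1 (g : R -> R) : Prop := forall (n : nat) (t : R), ex_derive (Derive_n g n) t.

(** * Vector fields on (t, x, psi), written in real coordinates psi = u + i v.
    In the paper's notation (psi, psi^* ), eta^psi = c_u + i c_v, eta^{psi^* } = c_u - i c_v. *)
Record VF := mkVF {
  c_t : R -> R -> R -> R -> R;
  c_x : R -> R -> R -> R -> R;
  c_u : R -> R -> R -> R -> R;
  c_v : R -> R -> R -> R -> R }.

Definition vf0 : VF :=
  mkVF (fun _ _ _ _ => 0) (fun _ _ _ _ => 0) (fun _ _ _ _ => 0) (fun _ _ _ _ => 0).

Definition vf_add (P Q : VF) : VF :=
  mkVF (fun t x u v => c_t P t x u v + c_t Q t x u v)
       (fun t x u v => c_x P t x u v + c_x Q t x u v)
       (fun t x u v => c_u P t x u v + c_u Q t x u v)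
       (fun t x u v => c_v P t x u v + c_v Q t x u v).

Definition vf_fmul (f : R -> R -> R) (Q : VF) : VF :=
  mkVF (fun t x u v => f t x * c_t Q t x u v)
       (fun t x u v => f t x * c_x Q t x u v)
       (fun t x u v => f t x * c_u Q t x u v)
       (fun t x u v => f t x * c_v Q t x u v).

Definition vf_scal (c : R) (Q : VF) : VF := vf_fmul (fun _ _ => c) Q.

Definition d_t : VF := mkVF (fun _ _ _ _ => 1) (fun _ _ _ _ => 0) (fun _ _ _ _ => 0) (fun _ _ _ _ => 0).
Definition d_x : VF := mkVF (fun _ _ _ _ => 0) (fun _ _ _ _ => 1) (fun _ _ _ _ => 0) (fun _ _ _ _ => 0).

(** M = i psi d_psi - i psi^* d_psi^*  =  -v d_u + u d_v *)
Definition Mvf : VF := mkVF (fun _ _ _ _ => 0) (fun _ _ _ _ => 0) (fun _ _ u v => - v) (fun _ _ u v => u).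
(** I = psi d_psi + psi^* d_psi^*  =  u d_u + v d_v *)
Definition Ivf : VF := mkVF (fun _ _ _ _ => 0) (fun _ _ _ _ => 0) (fun _ _ u v => u) (fun _ _ u v => v).

Definition Dop (tau : R -> R) : VF :=
  vf_add (vf_fmul (fun t _ => tau t) d_t)
    (vf_add (vf_fmul (fun t x => / 2 * Derive tau t * x) d_x)
            (vf_fmul (fun t x => / 8 * Derive_n tau 2 t * x ^ 2) Mvf)).

Definition Gop (chi : R -> R) : VF :=
  vf_add (vf_fmul (fun t _ => chi t) d_x)
         (vf_fmul (fun t x => / 2 * Derive chi t * x) Mvf).

Definition sigM (sigma : R -> R) : VF := vf_fmul (fun t _ => sigma t) Mvf.
Definition rhoI (rho : R -> R) : VF := vf_fmul (fun t _ => rho t) Ivf.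

(** * Lie symmetries of  i psi_t + psi_xx + V psi = 0,  V = a + i b, psi = u + i v, i.e.
      Delta1 = -v_t + u_xx + a u - b v = 0,   Delta2 = u_t + v_xx + a v + b u = 0.
    Infinitesimal invariance criterion: pr^(2) Q (Delta) = 0 on Delta = 0.
    Every 2-jet is the 2-jet of a smooth (polynomial) function at a point, so we
    range over smooth (U, W) and points (t, x).  The prolongation coefficients are
    phi^J = D_J (eta - tau u_t - xi u_x) + tau u_{J,t} + xi u_{J,x}. *)
Definition is_Lie_symmetry (V : R -> R -> C) (Q : VF) : Prop :=
  forall U W : R -> R -> R, smooth2 U -> smooth2 W ->
  let a := fun t x => Re (V t x) in
  let b := fun t x => Im (V t x) in
  let ev := fun (f : R -> R -> R -> R -> R) t x => f t x (U t x) (W t x) in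
  let tau := ev (c_t Q) in
  let xi := ev (c_x Q) in
  let hu := ev (c_u Q) in
  let hv := ev (c_v Q) in
  let phu := fun t x => hu t x - tau t x * dt U t x - xi t x * dx U t x in
  let phv := fun t x => hv t x - tau t x * dt W t x - xi t x * dx W t x in
  let phu_t := fun t x => dt phu t x + tau t x * dt (dt U) t x + xi t x * dx (dt U) t x in
  let phv_t := fun t x => dt phv t x + tau t x * dt (dt W) t x + xi t x * dx (dt W) t x in
  let phu_xx := fun t x =>
     dx (dx phu) t x + tau t x * dx (dx (dt U)) t x + xi t x * dx (dx (dx U)) t x in
  let phv_xx := fun t x =>
     dx (dx phv) t x + tau t x * dx (dx (dt W)) t x + xi t x * dx (dx (dx W)) t x in
  forall t x : R,
    - dt W t x + dx (dx U) t x + a t x * U t x - b t x * W t x = 0 ->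
    dt U t x + dx (dx W) t x + a t x * W t x + b t x * U t x = 0 ->
    tau t x * (dt a t x * U t x - dt b t x * W t x)
      + xi t x * (dx a t x * U t x - dx b t x * W t x)
      + a t x * hu t x - b t x * hv t x
      - phv_t t x + phu_xx t x = 0 /\
    tau t x * (dt a t x * W t x + dt b t x * U t x)
      + xi t x * (dx a t x * W t x + dx b t x * U t x)
      + a t x * hv t x + b t x * hu t x
      + phu_t t x + phv_xx t x = 0.

Definition gV (V : R -> R -> C) (Q : VF) : Prop := is_Lie_symmetry V Q.

Definition in_ess_span (Q : VF) : Prop :=
  exists tau chi sigma rho : R -> R,
    smooth1 tau /\ smooth1 chi /\ smooth1 sigma /\ smooth1 rho /\
    Q = vf_add (Dop tau) (vf_add (Gop chi) (vf_add (sigM sigma) (rhoI rho))).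

Definition in_GMI_span (Q : VF) : Prop :=
  exists chi sigma rho : R -> R,
    smooth1 chi /\ smooth1 sigma /\ smooth1 rho /\
    Q = vf_add (Gop chi) (vf_add (sigM sigma) (rhoI rho)).

Definition gV_ess (V : R -> R -> C) (Q : VF) : Prop := gV V Q /\ in_ess_span Q.

Fixpoint lincomb (c : nat -> R) (b : nat -> VF) (n : nat) : VF :=
  match n with
  | O => vf0
  | S k => vf_add (lincomb c b k) (vf_scal (c k) (b k))
  end.

Definition has_dim (P : VF -> Prop) (n : nat) : Prop :=
  exists b : nat -> VF,
    (forall i, (i < n)%nat -> P (b i)) /\
    (forall c : nat -> R, lincomb c b n = vf0 -> forall i, (i < n)%nat -> c i = 0) /\
    (forall Q, P Q -> exists c : nat -> R, Q = lincomb c b n).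

(* Main.v *)
Require Import Defs.
From Stdlib Require Import Reals Lra Lia Psatz Classical FunctionalExtensionality List.
Import ListNotations.
From Coquelicot Require Import Coquelicot.
Open Scope R_scope.


Lemma isd_mult f g x a b : is_derive f x a -> is_derive g x b ->
  is_derive (fun t => f t * g t) x (a * g x + f x * b).
Proof. intros Ha Hb. apply (is_derive_mult f g x a b Ha Hb). intros; apply Rmult_comm. Qed.
Lemma isd_plus f g x a b : is_derive f x a -> is_derive g x b ->
  is_derive (fun t => f t + g t) x (a + b).
Proof. intros Ha Hb. apply (is_derive_plus f g x a b Ha Hb). Qed.
Lemma isd_minus f g x a b : is_derive f x a -> is_derive g x b ->
  is_derive (fun t => f t - g t) x (a - b).
Proof. intros Ha Hb. apply (is_derive_minus f g x a b Ha Hb). Qed.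
Lemma isd_const (c x : R) : is_derive (fun _ => c) x 0.
Proof. apply (is_derive_const c x). Qed.
Lemma isd_id (x : R) : is_derive (fun t => t) x 1.
Proof. apply (is_derive_id x). Qed.
Lemma isd_scal f x c a : is_derive f x a -> is_derive (fun t => c * f t) x (c * a).
Proof. apply is_derive_scal. Qed.
Lemma isd_exp_lin k x : is_derive (fun t => exp (k * t)) x (k * exp (k * x)).
Proof.
  apply (is_derive_comp exp (fun t => k * t) x (exp (k*x)) k).
  apply is_derive_exp.
  assert (H := isd_scal (fun t => t) x k 1 (isd_id x)). rewrite Rmult_1_r in H. exact H.
Qed.

Lemma exd_plus f g x : ex_derive f x -> ex_derive g x -> ex_derive (fun t => f t + g t) x.
Proof. intros [a Ha] [b Hb]. exists (a+b). apply isd_plus; auto. Qed.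
Lemma exd_mult f g x : ex_derive f x -> ex_derive g x -> ex_derive (fun t => f t * g t) x.
Proof. intros [a Ha] [b Hb]. eexists. apply isd_mult; eauto. Qed.
Lemma exd_const (c x : R) : ex_derive (fun _ => c) x.
Proof. exists 0. apply isd_const. Qed.

Definition Cn (n : nat) (f : R -> R) : Prop :=
  forall k t, (k <= n)%nat -> ex_derive (Derive_n f k) t.

Lemma Derive_n_S f k t : Derive_n f (S k) t = Derive_n (Derive f) k t.
Proof.
  revert t. induction k; intros t.
  - reflexivity.
  - simpl. apply Derive_ext. intros s. apply IHk.
Qed.

Lemma Cn_ext n f g : (forall t, f t = g t) -> Cn n f -> Cn n g.
Proof.
  intros E H k t Hk. apply (ex_derive_ext (Derive_n f k)).
  - intros s. apply Derive_n_ext. exact E.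
  - apply H; exact Hk.
Qed.

Lemma Cn_S n f : (forall t, ex_derive f t) -> Cn n (Derive f) -> Cn (S n) f.
Proof.
  intros H0 H k t Hk. destruct k as [|k].
  - apply (ex_derive_ext f). reflexivity. apply H0.
  - apply (ex_derive_ext (Derive_n (Derive f) k)).
    + intros s. symmetry. apply Derive_n_S.
    + apply H. lia.
Qed.

Lemma Cn_S_inv n f : Cn (S n) f -> (forall t, ex_derive f t) /\ Cn n (Derive f).
Proof.
  intros H. split.
  - intros t. apply (ex_derive_ext (Derive_n f 0)). reflexivity. apply H. lia.
  - intros k t Hk. apply (ex_derive_ext (Derive_n f (S k))).
    + intros s. apply Derive_n_S.
    + apply H. lia.
Qed.

Lemma Cn_mono n f : Cn (S n) f -> Cn n f.
Proof. intros H k t Hk. apply H. lia. Qed.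

Lemma Cn_0 f : (forall t, ex_derive f t) -> Cn 0 f.
Proof. intros H k t Hk. destruct k; [|lia]. apply (ex_derive_ext f). reflexivity. apply H. Qed.

Lemma Cn_plus n : forall f g, Cn n f -> Cn n g -> Cn n (fun t => f t + g t).
Proof.
  induction n; intros f g Hf Hg.
  - apply Cn_0. intros t. apply exd_plus.
    apply (ex_derive_ext (Derive_n f 0)). reflexivity. apply Hf; lia.
    apply (ex_derive_ext (Derive_n g 0)). reflexivity. apply Hg; lia.
  - apply Cn_S_inv in Hf as [Hf0 Hf]. apply Cn_S_inv in Hg as [Hg0 Hg].
    apply Cn_S.
    + intros t. apply exd_plus; auto.
    + apply (Cn_ext n (fun t => Derive f t + Derive g t)).
      * intros t. symmetry. apply Derive_plus; auto.
      * apply IHn; auto.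
Qed.

Lemma Cn_mult n : forall f g, Cn n f -> Cn n g -> Cn n (fun t => f t * g t).
Proof.
  induction n; intros f g Hf Hg.
  - apply Cn_0. intros t. apply exd_mult.
    apply (ex_derive_ext (Derive_n f 0)). reflexivity. apply Hf; lia.
    apply (ex_derive_ext (Derive_n g 0)). reflexivity. apply Hg; lia.
  - pose proof (Cn_mono _ _ Hf) as Hf'. pose proof (Cn_mono _ _ Hg) as Hg'.
    apply Cn_S_inv in Hf as [Hf0 Hf]. apply Cn_S_inv in Hg as [Hg0 Hg].
    apply Cn_S.
    + intros t. apply exd_mult; auto.
    + apply (Cn_ext n (fun t => Derive f t * g t + f t * Derive g t)).
      * intros t. symmetry. apply Derive_mult; auto.
      * apply Cn_plus; apply IHn; auto.
Qed.

Lemma Cn_const n c : Cn n (fun _ => c).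
Proof.
  induction n.
  - apply Cn_0. intros; apply exd_const.
  - apply Cn_S. intros; apply exd_const.
    apply (Cn_ext n (fun _ => 0)). intros; symmetry; apply Derive_const. 
    destruct n; [apply Cn_0; intros; apply exd_const|].
    clear IHn. induction (S n) as [|m IH]. apply Cn_0; intros; apply exd_const.
    apply Cn_S. intros; apply exd_const.
    apply (Cn_ext m (fun _ => 0)). intros; symmetry; apply Derive_const. exact IH.
Qed.

Lemma smooth1_Cn f : smooth1 f <-> forall n, Cn n f.
Proof.
  split.
  - intros H n k t _. apply H.
  - intros H n t. apply (H n n t). lia.
Qed.

Lemma smooth1_ex_derive f : smooth1 f -> forall t, ex_derive f t.
Proof. intros H t. apply (ex_derive_ext (Derive_n f 0)). reflexivity. apply H. Qed.

Lemma smooth1_Derive f : smooth1 f -> smooth1 (Derive f).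
Proof.
  rewrite !smooth1_Cn. intros H n. apply (Cn_S_inv n f (H (S n))).
Qed.

Lemma smooth1_S f : (forall t, ex_derive f t) -> smooth1 (Derive f) -> smooth1 f.
Proof.
  rewrite !smooth1_Cn. intros H0 H n. destruct n. apply Cn_0; auto.
  apply Cn_S; auto.
Qed.

Lemma smooth1_ext f g : (forall t, f t = g t) -> smooth1 f -> smooth1 g.
Proof. rewrite !smooth1_Cn. intros E H n. apply (Cn_ext n f g E (H n)). Qed.

Lemma smooth1_plus f g : smooth1 f -> smooth1 g -> smooth1 (fun t => f t + g t).
Proof. rewrite !smooth1_Cn. intros; apply Cn_plus; auto. Qed.
Lemma smooth1_mult f g : smooth1 f -> smooth1 g -> smooth1 (fun t => f t * g t).
Proof. rewrite !smooth1_Cn. intros; apply Cn_mult; auto. Qed.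
Lemma smooth1_const c : smooth1 (fun _ => c).
Proof. rewrite smooth1_Cn. intros; apply Cn_const. Qed.
Lemma smooth1_scal c f : smooth1 f -> smooth1 (fun t => c * f t).
Proof. intros; apply smooth1_mult; auto using smooth1_const. Qed.
Lemma smooth1_opp f : smooth1 f -> smooth1 (fun t => - f t).
Proof. intros H. apply (smooth1_ext (fun t => (-1) * f t)). intros; ring. apply smooth1_scal; auto. Qed.
Lemma smooth1_minus f g : smooth1 f -> smooth1 g -> smooth1 (fun t => f t - g t).
Proof. intros. apply smooth1_plus; auto. apply smooth1_opp; auto. Qed.

Lemma smooth1_continuous f : smooth1 f -> forall t, continuous f t.
Proof. intros H t. apply (ex_derive_continuous (K:=R_AbsRing) (V:=R_NormedModule) f t). apply smooth1_ex_derive, H. Qed.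

Lemma RInt_isd (f : R -> R) a t : (forall s, continuous f s) ->
  is_derive (fun u => RInt f a u) t (f t).
Proof.
  intros Hc. apply (is_derive_RInt f (fun u => RInt f a u) a t).
  - apply filter_forall. intros u. apply (RInt_correct f a u).
    apply ex_RInt_continuous. intros; apply Hc.
  - apply Hc.
Qed.

Lemma smooth1_RInt f a : smooth1 f -> smooth1 (fun u => RInt f a u).
Proof.
  intros H. apply smooth1_S.
  - intros t. eexists. apply RInt_isd. apply smooth1_continuous, H.
  - apply (smooth1_ext f). intros t. symmetry. apply is_derive_unique.
    apply RInt_isd. apply smooth1_continuous, H. exact H.
Qed.

Lemma smooth_ode (q y z : R -> R) : smooth1 q ->
  (forall t, is_derive y t (z t)) -> (forall t, is_derive z t (q t * y t)) ->
  smooth1 y /\ smooth1 z.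
Proof.
  intros Hq Hy Hz. rewrite !smooth1_Cn. rewrite smooth1_Cn in Hq.
  assert (forall n, Cn n y /\ Cn n z).
  { induction n.
    - split; apply Cn_0; intros t; eexists; [apply Hy|apply Hz].
    - destruct IHn as [IH1 IH2]. split; apply Cn_S.
      + intros t; eexists; apply Hy.
      + apply (Cn_ext n z). intros t; symmetry; apply is_derive_unique; apply Hy. exact IH2.
      + intros t; eexists; apply Hz.
      + apply (Cn_ext n (fun t => q t * y t)). intros t; symmetry; apply is_derive_unique; apply Hz.
        apply Cn_mult; auto. }
  split; intros n; apply H.
Qed.

Fixpoint rep (n : nat) (l : list bool) : list bool :=
  match n with O => l | S n => true :: rep n l end.

Lemma Derive_n_pd f l x0 n t :
  Derive_n (fun s => pd l f s x0) n t = pd (rep n l) f t x0.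
Proof.
  revert t. induction n; intros t.
  - reflexivity.
  - change (Derive (Derive_n (fun s => pd l f s x0) n) t = Derive (fun s => pd (rep n l) f s x0) t).
    apply Derive_ext. intros s. apply IHn.
Qed.

Lemma smooth2_t f l x0 : smooth2 f -> smooth1 (fun s => pd l f s x0).
Proof.
  intros H n t.
  apply (ex_derive_ext (fun s => pd (rep n l) f s x0)).
  intros s. symmetry. apply Derive_n_pd. destruct (H (rep n l)) as [H1 _].
  exact (proj1 (H1 t x0)).
Qed.


Lemma bound_compact (q : R -> R) a b : (forall t, continuous q t) ->
  exists K, 0 < K /\ forall s, a <= s <= b -> Rabs (q s) <= K.
Proof.
  intros Hq. destruct (Rle_dec a b) as [Hab|Hab].
  - destruct (continuity_ab_maj (fun s => Rabs (q s)) a b Hab) as [Mx [HM _]].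
    + intros c _. apply continuity_pt_filterlim. apply (continuous_Rabs_comp q c (Hq c)).
    + exists (Rabs (q Mx) + 1). split. pose proof (Rabs_pos (q Mx)); lra.
      intros s Hs. specialize (HM s Hs). lra.
  - exists 1. split. lra. intros s Hs. lra.
Qed.

Lemma energy_ub w p q K : Rabs q <= K ->
  2 * w * p * (1 + q) <= (K + 1) * (w * w + p * p).
Proof.
  intros Hq. assert (H0 : 0 <= K) by (pose proof (Rabs_pos q); lra).
  assert (Hq' : - K <= q <= K) by (apply Rabs_le_between; exact Hq).
  destruct (Rle_dec 0 (w * p)) as [Hwp|Hwp].
  - assert (0 <= w * p * (K - q)) by (apply Rmult_le_pos; lra).
    assert (0 <= (K + 1) * ((w - p) * (w - p))) by (apply Rmult_le_pos; [lra| apply Rle_0_sqr]).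
    nra.
  - assert (0 <= - (w * p) * (K + q)) by (apply Rmult_le_pos; lra).
    assert (0 <= (K + 1) * ((w + p) * (w + p))) by (apply Rmult_le_pos; [lra| apply Rle_0_sqr]).
    nra.
Qed.

Lemma energy_lb w p q K : Rabs q <= K ->
  - ((K + 1) * (w * w + p * p)) <= 2 * w * p * (1 + q).
Proof.
  intros Hq. pose proof (energy_ub w (- p) q K Hq). nra.
Qed.

Lemma ode_uniq (q w p : R -> R) t1 : (forall t, continuous q t) ->
  (forall t, is_derive w t (p t)) -> (forall t, is_derive p t (q t * w t)) ->
  w t1 = 0 -> p t1 = 0 -> forall t, w t = 0.
Proof.
  intros Hq Hw Hp Hw1 Hp1 t.
  destruct (bound_compact q (Rmin t t1) (Rmax t t1) Hq) as [K [HK HqK]].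
  set (L := K + 1).
  set (E := fun s => w s * w s + p s * p s).
  set (dE := fun s => (p s * w s + w s * p s) + (q s * w s * p s + p s * (q s * w s))).
  assert (HE : forall s, is_derive E s (dE s)).
  { intros s. apply isd_plus; apply isd_mult; auto. }
  assert (Hb1 : forall s, Rmin t t1 <= s <= Rmax t t1 -> dE s <= L * E s).
  { intros s Hs. unfold dE, E, L. pose proof (energy_ub (w s) (p s) (q s) K (HqK s Hs)). nra. }
  assert (Hb2 : forall s, Rmin t t1 <= s <= Rmax t t1 -> - (L * E s) <= dE s).
  { intros s Hs. unfold dE, E, L. pose proof (energy_lb (w s) (p s) (q s) K (HqK s Hs)). nra. }
  assert (HEt : 0 <= E t) by (unfold E; nra).
  assert (HE1 : E t1 = 0) by (unfold E; rewrite Hw1, Hp1; ring).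
  assert (E t <= 0).
  { destruct (Rtotal_order t1 t) as [Hlt|[Heq|Hgt]].
    - set (F := fun s => E s * exp (- L * s)).
      set (dF := fun s => dE s * exp (- L * s) + E s * (- L * exp (- L * s))).
      assert (HF : forall s, derivable_pt_lim F s (dF s)).
      { intros s. apply is_derive_Reals. apply (isd_mult E (fun s => exp (- L * s))). apply HE. apply isd_exp_lin. }
      destruct (MVT_cor3 F dF t1 t Hlt) as [c [Hc1 [Hc2 Hc]]].
      { intros x _ _. apply HF. }
      assert (Hrange : Rmin t t1 <= c <= Rmax t t1).
      { unfold Rmin, Rmax; destruct (Rle_dec t t1); lra. }
      assert (dF c <= 0).
      { unfold dF. pose proof (Hb1 c Hrange). pose proof (exp_pos (- L * c)). nra. }
      assert (F t1 = 0) by (unfold F; rewrite HE1; ring).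
      assert (F t <= 0) by nra.
      unfold F in H1. pose proof (exp_pos (- L * t)). nra.
    - subst. lra.
    - set (F := fun s => E s * exp (L * s)).
      set (dF := fun s => dE s * exp (L * s) + E s * (L * exp (L * s))).
      assert (HF : forall s, derivable_pt_lim F s (dF s)).
      { intros s. apply is_derive_Reals. apply (isd_mult E (fun s => exp (L * s))). apply HE. apply isd_exp_lin. }
      destruct (MVT_cor3 F dF t t1 Hgt) as [c [Hc1 [Hc2 Hc]]].
      { intros x _ _. apply HF. }
      assert (Hrange : Rmin t t1 <= c <= Rmax t t1).
      { unfold Rmin, Rmax; destruct (Rle_dec t t1); lra. }
      assert (0 <= dF c).
      { unfold dF. pose proof (Hb2 c Hrange). pose proof (exp_pos (L * c)). nra. }
      assert (F t1 = 0) by (unfold F; rewrite HE1; ring).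
      assert (F t <= 0) by nra.
      unfold F in H1. pose proof (exp_pos (L * t)). nra. }
  unfold E in H. nra.
Qed.


Lemma int_pow_bound (f : R -> R) t n K : 0 <= K ->
  (forall s, Rmin 0 t <= s <= Rmax 0 t -> Rabs (f s) <= K * Rabs s ^ n) ->
  ex_RInt f 0 t -> Rabs (RInt f 0 t) <= K * Rabs t ^ (S n) / INR (S n).
Proof.
  intros HK Hb Hex. assert (HSn : 0 < INR (S n)) by (apply lt_0_INR; lia).
  destruct (Rle_dec 0 t) as [Ht|Ht].
  - rewrite (Rabs_pos_eq t) by lra.
    apply (norm_RInt_le f (fun s => K * s ^ n) 0 t (RInt f 0 t) (K * t ^ (S n) / INR (S n))).
    + exact Ht.
    + intros x Hx. specialize (Hb x). rewrite Rmin_left, Rmax_right in Hb by lra.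
      rewrite (Rabs_pos_eq x) in Hb by lra. apply Hb; lra.
    + exact (RInt_correct f 0 t Hex).
    + assert (HI := is_RInt_derive (fun s => K * s ^ (S n) / INR (S n)) (fun s => K * s ^ n) 0 t).
      replace (K * t ^ (S n) / INR (S n)) with
        (minus ((fun s => K * s ^ (S n) / INR (S n)) t) ((fun s => K * s ^ (S n) / INR (S n)) 0)).
      2:{ unfold minus, plus, opp; cbn -[pow INR]. rewrite pow_i by lia. field. lra. }
      apply HI.
      * intros x _. auto_derive. trivial. replace (match n with | 0%nat => 1 | S _ => INR n + 1 end) with (INR (S n)) by reflexivity. field. lra.
      * intros x _. apply (ex_derive_continuous (K:=R_AbsRing) (V:=R_NormedModule)). auto_derive. trivial.
  - rewrite (Rabs_left t) by lra.
    assert (Hex' : ex_RInt f t 0) by (apply ex_RInt_swap; exact Hex).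
    rewrite <- (opp_RInt_swap f t 0 Hex').
    change (Rabs (- RInt f t 0) <= K * (- t) ^ S n / INR (S n)).
    rewrite Rabs_Ropp.
    apply (norm_RInt_le f (fun s => K * (- s) ^ n) t 0 (RInt f t 0) (K * (-t) ^ (S n) / INR (S n))).
    + lra.
    + intros x Hx. specialize (Hb x). rewrite Rmin_right, Rmax_left in Hb by lra.
      destruct (Req_dec x 0) as [->|Hx0].
      * rewrite Rabs_R0 in Hb. replace (- 0) with 0 by ring. apply Hb; lra.
      * rewrite (Rabs_left x) in Hb by lra. apply Hb; lra.
    + exact (RInt_correct f t 0 Hex').
    + assert (HI := is_RInt_derive (fun s => - (K * (- s) ^ (S n) / INR (S n))) (fun s => K * (- s) ^ n) t 0).
      replace (K * (- t) ^ (S n) / INR (S n)) with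
        (minus ((fun s => - (K * (- s) ^ (S n) / INR (S n))) 0) ((fun s => - (K * (- s) ^ (S n) / INR (S n))) t)).
      2:{ unfold minus, plus, opp; cbn -[pow INR]. replace (-0) with 0 by ring. rewrite pow_i by lia. field. lra. }
      apply HI.
      * intros x _. auto_derive. trivial. replace (match n with | 0%nat => 1 | S _ => INR n + 1 end) with (INR (S n)) by reflexivity. field. lra.
      * intros x _. apply (ex_derive_continuous (K:=R_AbsRing) (V:=R_NormedModule)). auto_derive. trivial.
Qed.

Lemma cont_mult (f g : R -> R) x : continuous f x -> continuous g x -> continuous (fun t => f t * g t) x.
Proof. intros; apply (continuous_mult (U:=R_UniformSpace) (K:=R_AbsRing) f g x); auto. Qed.

Lemma isd_eq (f : R -> R) (x a b : R) : is_derive f x a -> a = b -> is_derive f x b.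
Proof. intros H ->; exact H. Qed.

Lemma RInt_ext_R (f g : R -> R) a b : (forall x, f x = g x) -> RInt f a b = RInt g a b.
Proof. intros H. apply RInt_ext. intros; apply H. Qed.

Lemma exRI (f : R -> R) a b : (forall s, continuous f s) -> ex_RInt f a b.
Proof. intros H. apply (ex_RInt_continuous (V:=R_CompleteNormedModule)). intros; apply H. Qed.

Fixpoint YZ (q : R -> R) (c0 c1 : R) (n : nat) : (R -> R) * (R -> R) :=
  match n with
  | O => (fun _ => c0, fun _ => c1)
  | S n => let p := YZ q c0 c1 n in
      (fun t => c0 + RInt (snd p) 0 t, fun t => c1 + RInt (fun s => q s * fst p s) 0 t)
  end.

Definition Yn q c0 c1 n := fst (YZ q c0 c1 n).
Definition Zn q c0 c1 n := snd (YZ q c0 c1 n).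

Lemma YZ_cont (q : R -> R) (c0 c1 : R) : (forall t, continuous q t) ->
  forall n t, continuous (Yn q c0 c1 n) t /\ continuous (Zn q c0 c1 n) t.
Proof.
  intros Hq n. induction n; intros t.
  - split; apply continuous_const.
  - assert (H1 : forall s, continuous (Zn q c0 c1 n) s) by (intros; apply IHn).
    assert (H2 : forall s, continuous (fun s => q s * Yn q c0 c1 n s) s)
      by (intros; apply cont_mult; [apply Hq| apply IHn]).
    split.
    + apply (ex_derive_continuous (K:=R_AbsRing) (V:=R_NormedModule)).
      eexists. apply (isd_plus (fun _ => c0) (fun t => RInt (Zn q c0 c1 n) 0 t)).
      apply isd_const. apply RInt_isd. exact H1.
    + apply (ex_derive_continuous (K:=R_AbsRing) (V:=R_NormedModule)).
      eexists. apply (isd_plus (fun _ => c1) (fun t => RInt (fun s => q s * Yn q c0 c1 n s) 0 t)).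
      apply isd_const. apply RInt_isd. exact H2.
Qed.

Lemma YZ_der (q : R -> R) (c0 c1 : R) : (forall t, continuous q t) -> forall n t,
  is_derive (Yn q c0 c1 (S n)) t (Zn q c0 c1 n t) /\
  is_derive (Zn q c0 c1 (S n)) t (q t * Yn q c0 c1 n t).
Proof.
  intros Hq n t. pose proof (YZ_cont q c0 c1 Hq n) as Hc.
  split.
  - eapply isd_eq. apply (isd_plus (fun _ => c0) (fun t => RInt (Zn q c0 c1 n) 0 t)).
    apply isd_const. apply RInt_isd. intros; apply Hc. ring.
  - eapply isd_eq. apply (isd_plus (fun _ => c1) (fun t => RInt (fun s => q s * Yn q c0 c1 n s) 0 t)).
    apply isd_const. apply RInt_isd. intros; apply cont_mult; [apply Hq|apply Hc]. ring.
Qed.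

Lemma YZ_at0 (q : R -> R) (c0 c1 : R) n : Yn q c0 c1 n 0 = c0 /\ Zn q c0 c1 n 0 = c1.
Proof.
  destruct n; unfold Yn, Zn; simpl. split; reflexivity.
  rewrite !RInt_point. unfold zero; simpl. split; ring.
Qed.

Lemma YZ_diff (q : R -> R) (c0 c1 : R) : (forall t, continuous q t) -> forall n t,
  Yn q c0 c1 (S (S n)) t - Yn q c0 c1 (S n) t = RInt (fun s => Zn q c0 c1 (S n) s - Zn q c0 c1 n s) 0 t /\
  Zn q c0 c1 (S (S n)) t - Zn q c0 c1 (S n) t = RInt (fun s => q s * (Yn q c0 c1 (S n) s - Yn q c0 c1 n s)) 0 t.
Proof.
  intros Hq n t. pose proof (YZ_cont q c0 c1 Hq) as Hc. split.
  - change (Yn q c0 c1 (S (S n)) t) with (c0 + RInt (Zn q c0 c1 (S n)) 0 t).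
    change (Yn q c0 c1 (S n) t) with (c0 + RInt (Zn q c0 c1 n) 0 t).
    pose proof (RInt_minus (V:=R_CompleteNormedModule) (Zn q c0 c1 (S n)) (Zn q c0 c1 n) 0 t) as HM.
    unfold minus, plus, opp in HM; simpl in HM.
    assert (E : RInt (fun s => Zn q c0 c1 (S n) s - Zn q c0 c1 n s) 0 t = RInt (fun s => Zn q c0 c1 (S n) s + - Zn q c0 c1 n s) 0 t).
    { apply RInt_ext_R. intros x. ring. }
    rewrite E.
    rewrite HM. ring.
    apply exRI; intros; apply Hc. apply exRI; intros; apply Hc.
  - change (Zn q c0 c1 (S (S n)) t) with (c1 + RInt (fun s => q s * Yn q c0 c1 (S n) s) 0 t).
    change (Zn q c0 c1 (S n) t) with (c1 + RInt (fun s => q s * Yn q c0 c1 n s) 0 t).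
    pose proof (RInt_minus (V:=R_CompleteNormedModule) (fun s => q s * Yn q c0 c1 (S n) s) (fun s => q s * Yn q c0 c1 n s) 0 t) as HM.
    unfold minus, plus, opp in HM; simpl in HM.
    assert (E : RInt (fun s => q s * (Yn q c0 c1 (S n) s - Yn q c0 c1 n s)) 0 t = RInt (fun s => q s * Yn q c0 c1 (S n) s + - (q s * Yn q c0 c1 n s)) 0 t).
    { apply RInt_ext_R. intros x. ring. }
    rewrite E.
    rewrite HM. ring.
    apply exRI; intros; apply cont_mult; [apply Hq|apply Hc].
    apply exRI; intros; apply cont_mult; [apply Hq|apply Hc].
Qed.

Lemma between_abs s t : Rmin 0 t <= s <= Rmax 0 t -> Rabs s <= Rabs t.
Proof.
  intros [H1 H2]. unfold Rmin, Rmax in *. destruct (Rle_dec 0 t).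
  - rewrite (Rabs_pos_eq s) by lra. rewrite (Rabs_pos_eq t) by lra. lra.
  - rewrite (Rabs_left1 t) by lra. unfold Rabs. destruct (Rcase_abs s); lra.
Qed.

Definition Dn q c0 c1 n t :=
  Rabs (Yn q c0 c1 (S n) t - Yn q c0 c1 n t) + Rabs (Zn q c0 c1 (S n) t - Zn q c0 c1 n t).

Lemma YZ_bound (q : R -> R) (c0 c1 T M : R) : (forall t, continuous q t) -> 0 <= M ->
  (forall s, Rabs s <= T -> Rabs (q s) <= M) ->
  forall n t, Rabs t <= T ->
  Dn q c0 c1 n t <= (Rabs c1 + M * Rabs c0) * (2 * (M + 1)) ^ n * Rabs t ^ (S n) / INR (Factorial.fact (S n)).
Proof.
  intros Hq HM HqM. pose proof (YZ_cont q c0 c1 Hq) as Hc.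
  set (A := Rabs c1 + M * Rabs c0). set (N := 2 * (M + 1)).
  assert (HA : 0 <= A) by (unfold A; pose proof (Rabs_pos c1); pose proof (Rabs_pos c0); nra).
  induction n; intros t Ht.
  - unfold Dn.
    change (Yn q c0 c1 1 t) with (c0 + RInt (fun _ => c1) 0 t).
    change (Zn q c0 c1 1 t) with (c1 + RInt (fun s => q s * c0) 0 t).
    change (Yn q c0 c1 0 t) with c0. change (Zn q c0 c1 0 t) with c1.
    assert (Ecan : forall a r : R, a + r - a = r) by (intros; ring).
    rewrite !Ecan.
    assert (H1 := int_pow_bound (fun _ => c1) t 0 (Rabs c1) (Rabs_pos c1)).
    assert (H2 := int_pow_bound (fun s => q s * c0) t 0 (M * Rabs c0)).
    simpl in H1, H2. simpl.
    assert (E1 : Rabs (RInt (fun _ : R => c1) 0 t) <= Rabs c1 * (Rabs t * 1) / 1).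
    { apply H1. intros; lra. apply exRI; intros; apply continuous_const. }
    assert (E2 : Rabs (RInt (fun s => q s * c0) 0 t) <= M * Rabs c0 * (Rabs t * 1) / 1).
    { apply H2. pose proof (Rabs_pos c0); nra.
      intros s Hs. rewrite Rabs_mult. pose proof (between_abs s t Hs).
      pose proof (HqM s ltac:(lra)). pose proof (Rabs_pos c0). nra.
      apply exRI; intros; apply cont_mult; [apply Hq| apply continuous_const]. }
    unfold A. lra.
  - unfold Dn. destruct (YZ_diff q c0 c1 Hq n t) as [E1 E2]. rewrite E1, E2.
    set (K1 := A * N ^ n / INR (Factorial.fact (S n))).
    assert (HK1 : 0 <= K1).
    { unfold K1. apply Rmult_le_pos. apply Rmult_le_pos. exact HA. apply pow_le. unfold N; lra.
      apply Rlt_le, Rinv_0_lt_compat, lt_0_INR, Factorial.lt_O_fact. }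
    assert (B1 : Rabs (RInt (fun s => Zn q c0 c1 (S n) s - Zn q c0 c1 n s) 0 t)
                 <= K1 * Rabs t ^ (S (S n)) / INR (S (S n))).
    { apply int_pow_bound. exact HK1.
      intros s Hs. pose proof (between_abs s t Hs).
      assert (Hs' : Rabs s <= T) by lra. specialize (IHn s Hs'). unfold Dn in IHn.
      pose proof (Rabs_pos (Yn q c0 c1 (S n) s - Yn q c0 c1 n s)).
      unfold K1. fold A N in IHn. unfold Rdiv in *. nra.
      apply exRI. intros; apply (continuous_minus (U:=R_UniformSpace) (V:=R_NormedModule)); apply Hc. }
    assert (B2 : Rabs (RInt (fun s => q s * (Yn q c0 c1 (S n) s - Yn q c0 c1 n s)) 0 t)
                 <= (M * K1) * Rabs t ^ (S (S n)) / INR (S (S n))).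
    { apply int_pow_bound. apply Rmult_le_pos; lra.
      intros s Hs. pose proof (between_abs s t Hs).
      assert (Hs' : Rabs s <= T) by lra. specialize (IHn s Hs'). unfold Dn in IHn.
      pose proof (Rabs_pos (Zn q c0 c1 (S n) s - Zn q c0 c1 n s)).
      pose proof (Rabs_pos (Yn q c0 c1 (S n) s - Yn q c0 c1 n s)).
      pose proof (HqM s Hs'). pose proof (Rabs_pos (q s)).
      rewrite Rabs_mult. fold A N in IHn. 
      assert (Rabs (Yn q c0 c1 (S n) s - Yn q c0 c1 n s) <= K1 * Rabs s ^ S n)
        by (unfold K1; unfold Rdiv in *; nra).
      nra.
      apply exRI. intros; apply cont_mult. apply Hq.
      apply (continuous_minus (U:=R_UniformSpace) (V:=R_NormedModule)); apply Hc. }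
    assert (Hf : INR (Factorial.fact (S (S n))) = INR (S (S n)) * INR (Factorial.fact (S n))).
    { rewrite fact_simpl, mult_INR. reflexivity. }
    assert (Hpos1 : 0 < INR (Factorial.fact (S n))) by (apply lt_0_INR, Factorial.lt_O_fact).
    assert (Hpos2 : 0 < INR (S (S n))) by (apply lt_0_INR; lia).
    assert (Ht0 : 0 <= Rabs t ^ (S (S n))) by (apply pow_le, Rabs_pos).
    assert (HNn : 0 <= N ^ n) by (apply pow_le; unfold N; lra).
    rewrite Hf. unfold K1 in B1, B2. simpl pow at 1.
    apply Rle_trans with ((1 + M) * (A * N ^ n / INR (Factorial.fact (S n))) * Rabs t ^ S (S n) / INR (S (S n))).
    { unfold Rdiv in *. nra. }
    unfold Rdiv. rewrite Rinv_mult.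
    assert (0 <= A * N ^ n * Rabs t ^ S (S n) * / INR (S (S n)) * / INR (Factorial.fact (S n))).
    { assert (0 < / INR (S (S n))) by (apply Rinv_0_lt_compat; lra).
      assert (0 < / INR (Factorial.fact (S n))) by (apply Rinv_0_lt_compat; lra).
      assert (0 <= A * N ^ n) by (apply Rmult_le_pos; lra).
      assert (0 <= A * N ^ n * Rabs t ^ S (S n)) by (apply Rmult_le_pos; lra).
      assert (0 <= A * N ^ n * Rabs t ^ S (S n) * / INR (S (S n))) by (apply Rmult_le_pos; lra).
      apply Rmult_le_pos; lra. }
    unfold N in *. nra.
Qed.

Fixpoint psum (a : nat -> R) (n : nat) : R :=
  match n with O => 0 | S n => psum a n + a n end.

Lemma psum_sum a n : psum a (S n) = sum_f_R0 a n.
Proof. induction n. simpl. ring. change (psum a (S (S n))) with (psum a (S n) + a (S n)). rewrite IHn. reflexivity. Qed.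

Lemma psum_cauchy (C x : R) : 0 <= C ->
  forall eps, 0 < eps -> exists N, forall n m, (N <= n)%nat -> (n <= m)%nat ->
    psum (fun k => C * (/ INR (Factorial.fact k) * x ^ k)) m -
    psum (fun k => C * (/ INR (Factorial.fact k) * x ^ k)) n < eps.
Proof.
  intros HC eps Heps.
  set (b := fun k => / INR (Factorial.fact k) * x ^ k).
  assert (Hcv : Un_cv (sum_f_R0 b) (exp x)) by exact (proj2_sig (exist_exp x)).
  destruct (CV_Cauchy (sum_f_R0 b) (exist _ (exp x) Hcv) (eps / (C + 1))) as [N0 HN0].
  { apply Rlt_gt. apply Rdiv_lt_0_compat; lra. }
  exists (S N0). intros n m Hn Hm.
  destruct n as [|n']; [lia|]. destruct m as [|m']; [lia|].
  assert (E : forall k, psum (fun k => C * b k) (S k) = C * sum_f_R0 b k).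
  { intros k. rewrite psum_sum. induction k. simpl. ring. simpl. rewrite IHk. ring. }
  unfold b in E. rewrite !E. fold b.
  specialize (HN0 m' n' ltac:(lia) ltac:(lia)). unfold Rdist in HN0.
  assert (C * (sum_f_R0 b m' - sum_f_R0 b n') <= C * Rabs (sum_f_R0 b m' - sum_f_R0 b n')).
  { apply Rmult_le_compat_l. exact HC. apply Rle_abs. }
  assert (C * Rabs (sum_f_R0 b m' - sum_f_R0 b n') <= C * (eps / (C + 1))).
  { apply Rmult_le_compat_l. exact HC. lra. }
  assert (C * (eps / (C + 1)) < eps).
  { unfold Rdiv. assert (0 < eps * / (C + 1)) by (apply Rmult_lt_0_compat; [lra| apply Rinv_0_lt_compat; lra]).
    apply Rlt_le_trans with ((C + 1) * (eps * / (C + 1))). nra.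
    right. field. lra. }
  lra.
Qed.

Lemma YZ_unif_cauchy (q : R -> R) (c0 c1 T : R) : (forall t, continuous q t) -> 0 < T ->
  forall eps, 0 < eps -> exists N, forall n m t, (N <= n)%nat -> (n <= m)%nat -> Rabs t <= T ->
    Rabs (Yn q c0 c1 m t - Yn q c0 c1 n t) + Rabs (Zn q c0 c1 m t - Zn q c0 c1 n t) < eps.
Proof.
  intros Hq HT eps Heps.
  destruct (bound_compact q (-T) T Hq) as [M [HM HqM]].
  assert (HqM' : forall s, Rabs s <= T -> Rabs (q s) <= M).
  { intros s Hs. apply HqM. apply Rabs_le_between. exact Hs. }
  set (A := Rabs c1 + M * Rabs c0). set (N := 2 * (M + 1)).
  assert (HA : 0 <= A) by (unfold A; pose proof (Rabs_pos c1); pose proof (Rabs_pos c0); nra).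
  set (a := fun k => (A * T) * (/ INR (Factorial.fact k) * (N * T) ^ k)).
  assert (Hd : forall k t, Rabs t <= T -> Dn q c0 c1 k t <= a k).
  { intros k t Ht. eapply Rle_trans. apply (YZ_bound q c0 c1 T M Hq ltac:(lra) HqM' k t Ht).
    fold A N. unfold a.
    assert (Hf : INR (Factorial.fact (S k)) = INR (S k) * INR (Factorial.fact k)).
    { rewrite fact_simpl, mult_INR. reflexivity. }
    assert (Hp1 : 0 < INR (Factorial.fact k)) by (apply lt_0_INR, Factorial.lt_O_fact).
    assert (Hp2 : 1 <= INR (S k)) by (rewrite S_INR; pose proof (pos_INR k); lra).
    assert (HtT : Rabs t ^ S k <= T ^ S k) by (apply pow_incr; split; [apply Rabs_pos|exact Ht]).
    assert (HNk : 0 <= N ^ k) by (apply pow_le; unfold N; lra).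
    rewrite Hf. rewrite Rpow_mult_distr. simpl (T ^ S k) in HtT.
    unfold Rdiv. rewrite Rinv_mult.
    assert (0 < / INR (S k) <= 1).
    { split. apply Rinv_0_lt_compat; lra. rewrite <- Rinv_1. apply Rinv_le_contravar; lra. }
    assert (0 < / INR (Factorial.fact k)) by (apply Rinv_0_lt_compat; lra).
    assert (0 <= A * N ^ k) by (apply Rmult_le_pos; lra).
    assert (0 <= Rabs t ^ S k) by (apply pow_le, Rabs_pos).
    assert (A * N ^ k * Rabs t ^ S k <= A * N ^ k * (T * T ^ k)) by (apply Rmult_le_compat_l; lra).
    assert (0 <= A * N ^ k * Rabs t ^ S k) by (apply Rmult_le_pos; lra).
    assert (0 <= A * N ^ k * Rabs t ^ S k * / INR (Factorial.fact k)) by (apply Rmult_le_pos; lra).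
    apply Rle_trans with (A * N ^ k * Rabs t ^ S k * / INR (Factorial.fact k)).
    { replace (A * N ^ k * Rabs t ^ S k * (/ INR (S k) * / INR (Factorial.fact k)))
        with (A * N ^ k * Rabs t ^ S k * / INR (Factorial.fact k) * / INR (S k)) by ring.
      nra. }
    replace (A * T * (/ INR (Factorial.fact k) * (N ^ k * T ^ k)))
      with (A * N ^ k * (T * T ^ k) * / INR (Factorial.fact k)) by ring.
    apply Rmult_le_compat_r; lra. }
  assert (Htele : forall n j t, Rabs t <= T ->
     Rabs (Yn q c0 c1 (n + j) t - Yn q c0 c1 n t) + Rabs (Zn q c0 c1 (n + j) t - Zn q c0 c1 n t)
     <= psum a (n + j) - psum a n).
  { intros n j t Ht. induction j.
    - rewrite Nat.add_0_r. unfold Rminus. rewrite !Rplus_opp_r, Rabs_R0. lra.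
    - rewrite Nat.add_succ_r. simpl (psum a (S (n + j))).
      specialize (Hd (n + j)%nat t Ht). unfold Dn in Hd.
      pose proof (Rabs_triang (Yn q c0 c1 (S (n + j)) t - Yn q c0 c1 (n + j) t) (Yn q c0 c1 (n + j) t - Yn q c0 c1 n t)).
      pose proof (Rabs_triang (Zn q c0 c1 (S (n + j)) t - Zn q c0 c1 (n + j) t) (Zn q c0 c1 (n + j) t - Zn q c0 c1 n t)).
      replace (Yn q c0 c1 (S (n + j)) t - Yn q c0 c1 (n + j) t + (Yn q c0 c1 (n + j) t - Yn q c0 c1 n t))
        with (Yn q c0 c1 (S (n + j)) t - Yn q c0 c1 n t) in H by ring.
      replace (Zn q c0 c1 (S (n + j)) t - Zn q c0 c1 (n + j) t + (Zn q c0 c1 (n + j) t - Zn q c0 c1 n t))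
        with (Zn q c0 c1 (S (n + j)) t - Zn q c0 c1 n t) in H0 by ring.
      lra. }
  assert (HAT : 0 <= A * T) by (apply Rmult_le_pos; lra).
  destruct (psum_cauchy (A * T) (N * T) HAT eps Heps) as [N0 HN0].
  exists N0. intros n m t Hn Hm Ht.
  replace m with (n + (m - n))%nat by lia.
  eapply Rle_lt_trans. apply Htele. exact Ht.
  apply HN0; lia.
Qed.

Definition ylim q c0 c1 t := real (Lim_seq (fun n => Yn q c0 c1 n t)).
Definition zlim q c0 c1 t := real (Lim_seq (fun n => Zn q c0 c1 n t)).

Lemma cauchy_lim (u : nat -> R) : (forall eps, 0 < eps -> exists N, forall n m, (N <= n)%nat -> (n <= m)%nat -> Rabs (u m - u n) < eps) ->
  is_lim_seq u (real (Lim_seq u)).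
Proof.
  intros H. assert (Hex : ex_finite_lim_seq u).
  { apply ex_lim_seq_cauchy_corr. intros eps. destruct (H eps (cond_pos eps)) as [N HN].
    exists N. intros n m Hn Hm. destruct (Compare_dec.le_lt_dec n m).
    - rewrite Rabs_minus_sym. apply HN; lia.
    - apply HN; lia. }
  destruct Hex as [l Hl]. rewrite (is_lim_seq_unique _ _ Hl). exact Hl.
Qed.

Lemma YZ_lim (q : R -> R) (c0 c1 : R) : (forall t, continuous q t) -> forall t,
  is_lim_seq (fun n => Yn q c0 c1 n t) (ylim q c0 c1 t) /\ is_lim_seq (fun n => Zn q c0 c1 n t) (zlim q c0 c1 t).
Proof.
  intros Hq t. assert (HT : 0 < Rabs t + 1) by (pose proof (Rabs_pos t); lra).
  split; apply cauchy_lim; intros eps Heps;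
    destruct (YZ_unif_cauchy q c0 c1 (Rabs t + 1) Hq HT eps Heps) as [N HN];
    exists N; intros n m Hn Hm; specialize (HN n m t Hn Hm ltac:(lra));
    pose proof (Rabs_pos (Yn q c0 c1 m t - Yn q c0 c1 n t));
    pose proof (Rabs_pos (Zn q c0 c1 m t - Zn q c0 c1 n t)); lra.
Qed.

Lemma YZ_unif (q : R -> R) (c0 c1 T : R) : (forall t, continuous q t) -> 0 < T ->
  forall eps, 0 < eps -> exists N, forall n t, (N <= n)%nat -> Rabs t <= T ->
    Rabs (ylim q c0 c1 t - Yn q c0 c1 n t) + Rabs (zlim q c0 c1 t - Zn q c0 c1 n t) <= eps.
Proof.
  intros Hq HT eps Heps.
  destruct (YZ_unif_cauchy q c0 c1 T Hq HT eps Heps) as [N HN].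
  exists N. intros n t Hn Ht.
  destruct (YZ_lim q c0 c1 Hq t) as [Ly Lz].
  apply Rle_plus_epsilon. intros d Hd.
  apply is_lim_seq_Reals in Ly. apply is_lim_seq_Reals in Lz.
  destruct (Ly (d / 2) ltac:(lra)) as [N1 H1]. destruct (Lz (d / 2) ltac:(lra)) as [N2 H2].
  set (m := Nat.max n (Nat.max N1 N2)).
  specialize (H1 m ltac:(unfold m; lia)). specialize (H2 m ltac:(unfold m; lia)).
  specialize (HN n m t Hn ltac:(unfold m; lia) Ht).
  unfold Rdist in H1, H2.
  pose proof (Rabs_triang (ylim q c0 c1 t - Yn q c0 c1 m t) (Yn q c0 c1 m t - Yn q c0 c1 n t)).
  pose proof (Rabs_triang (zlim q c0 c1 t - Zn q c0 c1 m t) (Zn q c0 c1 m t - Zn q c0 c1 n t)).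
  rewrite (Rabs_minus_sym (ylim q c0 c1 t)) in H.
  rewrite (Rabs_minus_sym (zlim q c0 c1 t)) in H0.
  replace (Yn q c0 c1 m t - ylim q c0 c1 t + (Yn q c0 c1 m t - Yn q c0 c1 n t)) with
     (Yn q c0 c1 m t - ylim q c0 c1 t + (Yn q c0 c1 m t - Yn q c0 c1 n t)) in H by ring.
  assert (E1 : ylim q c0 c1 t - Yn q c0 c1 n t = (ylim q c0 c1 t - Yn q c0 c1 m t) + (Yn q c0 c1 m t - Yn q c0 c1 n t)) by ring.
  assert (E2 : zlim q c0 c1 t - Zn q c0 c1 n t = (zlim q c0 c1 t - Zn q c0 c1 m t) + (Zn q c0 c1 m t - Zn q c0 c1 n t)) by ring.
  rewrite E1, E2.
  pose proof (Rabs_triang (ylim q c0 c1 t - Yn q c0 c1 m t) (Yn q c0 c1 m t - Yn q c0 c1 n t)).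
  pose proof (Rabs_triang (zlim q c0 c1 t - Zn q c0 c1 m t) (Zn q c0 c1 m t - Zn q c0 c1 n t)).
  rewrite (Rabs_minus_sym (ylim q c0 c1 t)) in H3.
  rewrite (Rabs_minus_sym (zlim q c0 c1 t)) in H4.
  lra.
Qed.

Lemma ode_exists (q : R -> R) (c0 c1 : R) : (forall t, continuous q t) ->
  (forall t, is_derive (ylim q c0 c1) t (zlim q c0 c1 t) /\
             is_derive (zlim q c0 c1) t (q t * ylim q c0 c1 t)) /\
  ylim q c0 c1 0 = c0 /\ zlim q c0 c1 0 = c1.
Proof.
  intros Hq. split; [intros t|split].
  2:{ unfold ylim. rewrite (Lim_seq_ext _ (fun _ => c0)). rewrite Lim_seq_const. reflexivity.
      intros n; apply YZ_at0. }
  2:{ unfold zlim. rewrite (Lim_seq_ext _ (fun _ => c1)). rewrite Lim_seq_const. reflexivity.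
      intros n; apply YZ_at0. }
  assert (HT : 0 < Rabs t + 1) by (pose proof (Rabs_pos t); lra).
  set (d := mkposreal _ HT).
  assert (Hbt : Boule 0 d t) by (unfold Boule; simpl; rewrite Rminus_0_r; lra).
  destruct (bound_compact q (-(Rabs t + 1)) (Rabs t + 1) Hq) as [M [HM HqM]].
  split; apply is_derive_Reals.
  - apply (CVU_derivable (fun n => Yn q c0 c1 (S n)) (Zn q c0 c1) (ylim q c0 c1) (zlim q c0 c1) 0 d); [| | |exact Hbt].
    + intros eps Heps. destruct (YZ_unif q c0 c1 (Rabs t + 1) Hq HT (eps / 2)) as [N HN]. lra.
      exists N. intros n y Hn Hb. unfold Boule in Hb; simpl in Hb. rewrite Rminus_0_r in Hb.
      assert (Hy : Rabs y <= Rabs t + 1) by lra.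
      specialize (HN n y Hn Hy).
      pose proof (Rabs_pos (zlim q c0 c1 y - Zn q c0 c1 n y)).
      pose proof (Rabs_pos (ylim q c0 c1 y - Yn q c0 c1 n y)). lra.
    + intros x _. apply is_lim_seq_Reals.
      apply (proj1 (is_lim_seq_incr_1 (fun n => Yn q c0 c1 n x) (ylim q c0 c1 x))). 
      exact (proj1 (YZ_lim q c0 c1 Hq x)).
    + intros n x _. apply is_derive_Reals. exact (proj1 (YZ_der q c0 c1 Hq n x)).
  - apply (CVU_derivable (fun n => Zn q c0 c1 (S n)) (fun n x => q x * Yn q c0 c1 n x)
             (zlim q c0 c1) (fun x => q x * ylim q c0 c1 x) 0 d); [| | |exact Hbt].
    + intros eps Heps. destruct (YZ_unif q c0 c1 (Rabs t + 1) Hq HT (eps / (M + 1))) as [N HN].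
      { apply Rdiv_lt_0_compat; lra. }
      exists N. intros n y Hn Hb. unfold Boule in Hb; simpl in Hb. rewrite Rminus_0_r in Hb.
      assert (Hy : Rabs y <= Rabs t + 1) by lra.
      specialize (HN n y Hn Hy).
      pose proof (Rabs_pos (zlim q c0 c1 y - Zn q c0 c1 n y)).
      pose proof (Rabs_pos (ylim q c0 c1 y - Yn q c0 c1 n y)).
      assert (Hqy : Rabs (q y) <= M) by (apply HqM; apply Rabs_le_between; exact Hy).
      replace (q y * ylim q c0 c1 y - q y * Yn q c0 c1 n y) with (q y * (ylim q c0 c1 y - Yn q c0 c1 n y)) by ring.
      rewrite Rabs_mult. pose proof (Rabs_pos (q y)).
      assert (Rabs (ylim q c0 c1 y - Yn q c0 c1 n y) <= eps / (M + 1)) by lra.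
      assert (HMe : M * (eps / (M + 1)) < eps).
      { unfold Rdiv. assert (0 < eps * / (M + 1)) by (apply Rmult_lt_0_compat; [lra| apply Rinv_0_lt_compat; lra]).
        apply Rlt_le_trans with ((M + 1) * (eps * / (M + 1))). nra. right. field. lra. }
      apply Rle_lt_trans with (M * (eps / (M + 1))); [|exact HMe].
      apply Rmult_le_compat; auto.
    + intros x _. apply is_lim_seq_Reals.
      apply (proj1 (is_lim_seq_incr_1 (fun n => Zn q c0 c1 n x) (zlim q c0 c1 x))). 
      exact (proj2 (YZ_lim q c0 c1 Hq x)).
    + intros n x _. apply is_derive_Reals. exact (proj2 (YZ_der q c0 c1 Hq n x)).
Qed.


Definition evq (f : R -> R -> R -> R -> R) (U W : R -> R -> R) t x := f t x (U t x) (W t x).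
Definition phU Q (U W : R -> R -> R) t x :=
  evq (c_u Q) U W t x - evq (c_t Q) U W t x * dt U t x - evq (c_x Q) U W t x * dx U t x.
Definition phV Q (U W : R -> R -> R) t x :=
  evq (c_v Q) U W t x - evq (c_t Q) U W t x * dt W t x - evq (c_x Q) U W t x * dx W t x.

Definition LHS1 (V : R -> R -> C) Q U W t x :=
  let a := fun t x => Re (V t x) in
  let b := fun t x => Im (V t x) in
    evq (c_t Q) U W t x * (dt a t x * U t x - dt b t x * W t x)
      + evq (c_x Q) U W t x * (dx a t x * U t x - dx b t x * W t x)
      + a t x * evq (c_u Q) U W t x - b t x * evq (c_v Q) U W t x
      - (dt (phV Q U W) t x + evq (c_t Q) U W t x * dt (dt W) t x + evq (c_x Q) U W t x * dx (dt W) t x)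
      + (dx (dx (phU Q U W)) t x + evq (c_t Q) U W t x * dx (dx (dt U)) t x + evq (c_x Q) U W t x * dx (dx (dx U)) t x).

Definition LHS2 (V : R -> R -> C) Q U W t x :=
  let a := fun t x => Re (V t x) in
  let b := fun t x => Im (V t x) in
    evq (c_t Q) U W t x * (dt a t x * W t x + dt b t x * U t x)
      + evq (c_x Q) U W t x * (dx a t x * W t x + dx b t x * U t x)
      + a t x * evq (c_v Q) U W t x + b t x * evq (c_u Q) U W t x
      + (dt (phU Q U W) t x + evq (c_t Q) U W t x * dt (dt U) t x + evq (c_x Q) U W t x * dx (dt U) t x)
      + (dx (dx (phV Q U W)) t x + evq (c_t Q) U W t x * dx (dx (dt W)) t x + evq (c_x Q) U W t x * dx (dx (dx W)) t x).

Lemma Lie_alt V Q : is_Lie_symmetry V Q <->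
  (forall U W : R -> R -> R, smooth2 U -> smooth2 W -> forall t x : R,
    - dt W t x + dx (dx U) t x + Re (V t x) * U t x - Im (V t x) * W t x = 0 ->
    dt U t x + dx (dx W) t x + Re (V t x) * W t x + Im (V t x) * U t x = 0 ->
    LHS1 V Q U W t x = 0 /\ LHS2 V Q U W t x = 0).
Proof.
  unfold is_Lie_symmetry. split; intros H U W HU HW; exact (H U W HU HW).
Qed.

Definition GMI (chi sig rho : R -> R) : VF := vf_add (Gop chi) (vf_add (sigM sig) (rhoI rho)).
Definition th (chi sig : R -> R) t x := / 2 * Derive chi t * x + sig t.

Lemma G_t chi sig rho U W t x : evq (c_t (GMI chi sig rho)) U W t x = 0.
Proof. unfold evq, GMI, Gop, sigM, rhoI, vf_add, vf_fmul, Mvf, Ivf, d_x; simpl. ring. Qed.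
Lemma G_x chi sig rho U W t x : evq (c_x (GMI chi sig rho)) U W t x = chi t.
Proof. unfold evq, GMI, Gop, sigM, rhoI, vf_add, vf_fmul, Mvf, Ivf, d_x; simpl. ring. Qed.
Lemma G_u chi sig rho U W t x : evq (c_u (GMI chi sig rho)) U W t x = - th chi sig t x * W t x + rho t * U t x.
Proof. unfold th, evq, GMI, Gop, sigM, rhoI, vf_add, vf_fmul, Mvf, Ivf, d_x; simpl. ring. Qed.
Lemma G_v chi sig rho U W t x : evq (c_v (GMI chi sig rho)) U W t x = th chi sig t x * U t x + rho t * W t x.
Proof. unfold th, evq, GMI, Gop, sigM, rhoI, vf_add, vf_fmul, Mvf, Ivf, d_x; simpl. ring. Qed.

Lemma G_phU chi sig rho U W t x : phU (GMI chi sig rho) U W t x =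
  - th chi sig t x * W t x + rho t * U t x - chi t * dx U t x.
Proof. unfold phU. rewrite G_u, G_t, G_x. ring. Qed.
Lemma G_phV chi sig rho U W t x : phV (GMI chi sig rho) U W t x =
  th chi sig t x * U t x + rho t * W t x - chi t * dx W t x.
Proof. unfold phV. rewrite G_v, G_t, G_x. ring. Qed.

Lemma exd_t U l t x : smooth2 U -> ex_derive (fun s => pd l U s x) t.
Proof. intros H. destruct (H l) as [H1 _]. exact (proj1 (H1 t x)). Qed.
Lemma exd_x U l t x : smooth2 U -> ex_derive (fun y => pd l U t y) x.
Proof. intros H. destruct (H l) as [H1 _]. exact (proj2 (H1 t x)). Qed.

Ltac toR := match goal with |- @eq _ ?a ?b => change (@eq R a b) end.

Ltac eta_norm := repeat match goal with |- context [fun x0 : R => ?f x0] => change (fun x0 : R => f x0) with f end.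

Ltac exd1 := match goal with
  | |- ex_derive (fun s => Derive ?f s) _ => apply smooth1_ex_derive, smooth1_Derive; assumption
  | |- ex_derive (fun s => dx (dx ?U) s ?y) ?t => exact (exd_t U (false::false::nil) t y ltac:(assumption))
  | |- ex_derive (fun s => dt (dx ?U) s ?y) ?t => exact (exd_t U (true::false::nil) t y ltac:(assumption))
  | |- ex_derive (fun s => dx (dt ?U) s ?y) ?t => exact (exd_t U (false::true::nil) t y ltac:(assumption))
  | |- ex_derive (fun s => dx ?U s ?y) ?t => exact (exd_t U (false::nil) t y ltac:(assumption))
  | |- ex_derive (fun s => dt ?U s ?y) ?t => exact (exd_t U (true::nil) t y ltac:(assumption))
  | |- ex_derive (fun z => dx (dx (dx ?U)) ?t z) ?y => exact (exd_x U (false::false::false::nil) t y ltac:(assumption))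
  | |- ex_derive (fun z => dx (dx ?U) ?t z) ?y => exact (exd_x U (false::false::nil) t y ltac:(assumption))
  | |- ex_derive (fun z => dx (dt ?U) ?t z) ?y => exact (exd_x U (false::true::nil) t y ltac:(assumption))
  | |- ex_derive (fun z => dt (dx ?U) ?t z) ?y => exact (exd_x U (true::false::nil) t y ltac:(assumption))
  | |- ex_derive (fun z => dx ?U ?t z) ?y => exact (exd_x U (false::nil) t y ltac:(assumption))
  | |- ex_derive (fun z => dt ?U ?t z) ?y => exact (exd_x U (true::nil) t y ltac:(assumption))
  | |- ex_derive (fun s => ?U s ?y) ?t => exact (exd_t U nil t y ltac:(assumption))
  | |- ex_derive (fun z => ?U ?t z) ?y => exact (exd_x U nil t y ltac:(assumption))
  | |- ex_derive (fun s => ?f s) _ => apply smooth1_ex_derive; assumption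
  end.

Ltac exd_solve := repeat (match goal with |- _ /\ _ => split | |- True => exact I | |- ex_derive _ _ => exd1 end).

Lemma D_phV_t chi sig rho U W t x : smooth1 chi -> smooth1 sig -> smooth1 rho -> smooth2 U -> smooth2 W ->
  dt (phV (GMI chi sig rho) U W) t x =
  (/ 2 * Derive (Derive chi) t * x + Derive sig t) * U t x + th chi sig t x * dt U t x
  + Derive rho t * W t x + rho t * dt W t x - Derive chi t * dx W t x - chi t * dt (dx W) t x.
Proof.
  intros Hc Hs Hr HU HW. unfold dt at 1.
  rewrite (Derive_ext _ (fun s => th chi sig s x * U s x + rho s * W s x - chi s * dx W s x))
    by (intros; apply G_phV).
  apply is_derive_unique. unfold th. auto_derive.
  - exd_solve.
  - unfold dt. toR. eta_norm. field.
Qed.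

Lemma D_phU_t chi sig rho U W t x : smooth1 chi -> smooth1 sig -> smooth1 rho -> smooth2 U -> smooth2 W ->
  dt (phU (GMI chi sig rho) U W) t x =
  - ((/ 2 * Derive (Derive chi) t * x + Derive sig t) * W t x) - th chi sig t x * dt W t x
  + Derive rho t * U t x + rho t * dt U t x - Derive chi t * dx U t x - chi t * dt (dx U) t x.
Proof.
  intros Hc Hs Hr HU HW. unfold dt at 1.
  rewrite (Derive_ext _ (fun s => - th chi sig s x * W s x + rho s * U s x - chi s * dx U s x))
    by (intros; apply G_phU).
  apply is_derive_unique. unfold th. auto_derive.
  - exd_solve.
  - cbv beta delta [dt dx]. toR. eta_norm. field.
Qed.

Lemma D_phU_x chi sig rho U W t y : smooth1 chi -> smooth1 sig -> smooth1 rho -> smooth2 U -> smooth2 W ->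
  dx (phU (GMI chi sig rho) U W) t y =
  - (/ 2 * Derive chi t * W t y) - th chi sig t y * dx W t y + rho t * dx U t y - chi t * dx (dx U) t y.
Proof.
  intros Hc Hs Hr HU HW. unfold dx at 1.
  rewrite (Derive_ext _ (fun z => - th chi sig t z * W t z + rho t * U t z - chi t * dx U t z))
    by (intros; apply G_phU).
  apply is_derive_unique. unfold th. auto_derive.
  - exd_solve.
  - cbv beta delta [dt dx]. toR. eta_norm. field.
Qed.

Lemma D_phU_xx chi sig rho U W t x : smooth1 chi -> smooth1 sig -> smooth1 rho -> smooth2 U -> smooth2 W ->
  dx (dx (phU (GMI chi sig rho) U W)) t x =
  - (Derive chi t * dx W t x) - th chi sig t x * dx (dx W) t x + rho t * dx (dx U) t x - chi t * dx (dx (dx U)) t x.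
Proof.
  intros Hc Hs Hr HU HW. unfold dx at 1.
  rewrite (Derive_ext _ (fun z => - (/ 2 * Derive chi t * W t z) - th chi sig t z * dx W t z + rho t * dx U t z - chi t * dx (dx U) t z))
    by (intros; apply D_phU_x; assumption).
  apply is_derive_unique. unfold th. auto_derive.
  - exd_solve.
  - cbv beta delta [dt dx]. toR. eta_norm. field.
Qed.

Lemma D_phV_x chi sig rho U W t y : smooth1 chi -> smooth1 sig -> smooth1 rho -> smooth2 U -> smooth2 W ->
  dx (phV (GMI chi sig rho) U W) t y =
  / 2 * Derive chi t * U t y + th chi sig t y * dx U t y + rho t * dx W t y - chi t * dx (dx W) t y.
Proof.
  intros Hc Hs Hr HU HW. unfold dx at 1.
  rewrite (Derive_ext _ (fun z => th chi sig t z * U t z + rho t * W t z - chi t * dx W t z))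
    by (intros; apply G_phV).
  apply is_derive_unique. unfold th. auto_derive.
  - exd_solve.
  - cbv beta delta [dt dx]. toR. eta_norm. field.
Qed.

Lemma D_phV_xx chi sig rho U W t x : smooth1 chi -> smooth1 sig -> smooth1 rho -> smooth2 U -> smooth2 W ->
  dx (dx (phV (GMI chi sig rho) U W)) t x =
  Derive chi t * dx U t x + th chi sig t x * dx (dx U) t x + rho t * dx (dx W) t x - chi t * dx (dx (dx W)) t x.
Proof.
  intros Hc Hs Hr HU HW. unfold dx at 1.
  rewrite (Derive_ext _ (fun z => / 2 * Derive chi t * U t z + th chi sig t z * dx U t z + rho t * dx W t z - chi t * dx (dx W) t z))
    by (intros; apply D_phV_x; assumption).
  apply is_derive_unique. unfold th. auto_derive.
  - exd_solve.
  - cbv beta delta [dt dx]. toR. eta_norm. field.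
Qed.

Lemma schwarz_s2 W t x : smooth2 W -> dt (dx W) t x = dx (dt W) t x.
Proof.
  intros HW. unfold dt, dx.
  apply (Schwarz W t x).
  - exists (mkposreal 1 Rlt_0_1). intros u v _ _.
    split; [exact (exd_t W nil u v HW)|].
    split; [exact (exd_x W nil u v HW)|].
    split; [exact (exd_t W (false::nil) u v HW)|].
    exact (exd_x W (true::nil) u v HW).
  - apply continuity_2d_pt_filterlim. destruct (HW (true::false::nil)) as [_ H2]. exact (H2 t x).
  - apply continuity_2d_pt_filterlim. destruct (HW (false::true::nil)) as [_ H2]. exact (H2 t x).
Qed.

Definition condp (V : R -> R -> C) chi sig rho t x :=
  chi t * dx (fun t x => Re (V t x)) t x = / 2 * Derive (Derive chi) t * x + Derive sig t /\
  chi t * dx (fun t x => Im (V t x)) t x = - Derive rho t.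

Lemma LHS_resid V chi sig rho U W t x : smooth1 chi -> smooth1 sig -> smooth1 rho -> smooth2 U -> smooth2 W ->
  - dt W t x + dx (dx U) t x + Re (V t x) * U t x - Im (V t x) * W t x = 0 ->
  dt U t x + dx (dx W) t x + Re (V t x) * W t x + Im (V t x) * U t x = 0 ->
  LHS1 V (GMI chi sig rho) U W t x =
    (chi t * dx (fun t x => Re (V t x)) t x - (/ 2 * Derive (Derive chi) t * x + Derive sig t)) * U t x
    - (chi t * dx (fun t x => Im (V t x)) t x + Derive rho t) * W t x /\
  LHS2 V (GMI chi sig rho) U W t x =
    (chi t * dx (fun t x => Re (V t x)) t x - (/ 2 * Derive (Derive chi) t * x + Derive sig t)) * W t x
    + (chi t * dx (fun t x => Im (V t x)) t x + Derive rho t) * U t x.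
Proof.
  intros Hc Hs Hr HU HW E1 E2. unfold LHS1, LHS2.
  rewrite D_phV_t, D_phU_xx, D_phU_t, D_phV_xx by assumption.
  rewrite !G_t, !G_x, !G_u, !G_v.
  rewrite (schwarz_s2 W t x HW), (schwarz_s2 U t x HU).
  split.
  - transitivity ((chi t * dx (fun t x => Re (V t x)) t x - (/ 2 * Derive (Derive chi) t * x + Derive sig t)) * U t x
      - (chi t * dx (fun t x => Im (V t x)) t x + Derive rho t) * W t x
      + rho t * (- dt W t x + dx (dx U) t x + Re (V t x) * U t x - Im (V t x) * W t x)
      - th chi sig t x * (dt U t x + dx (dx W) t x + Re (V t x) * W t x + Im (V t x) * U t x)).
    + unfold th. ring.
    + rewrite E1, E2. ring.
  - transitivity ((chi t * dx (fun t x => Re (V t x)) t x - (/ 2 * Derive (Derive chi) t * x + Derive sig t)) * W t x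
      + (chi t * dx (fun t x => Im (V t x)) t x + Derive rho t) * U t x
      + rho t * (dt U t x + dx (dx W) t x + Re (V t x) * W t x + Im (V t x) * U t x)
      + th chi sig t x * (- dt W t x + dx (dx U) t x + Re (V t x) * U t x - Im (V t x) * W t x)).
    + unfold th. ring.
    + rewrite E1, E2. ring.
Qed.

Lemma pd_aff c d l : exists c' d', forall s y, pd l (fun s y => c + d * s) s y = c' + d' * s.
Proof.
  induction l as [|h l IH].
  - exists c, d. reflexivity.
  - destruct IH as [c' [d' H]]. destruct h.
    + exists d', 0. intros s y. simpl. unfold dt.
      rewrite (Derive_ext _ (fun s => c' + d' * s)) by (intros; apply H).
      apply is_derive_unique. auto_derive. trivial. ring.
    + exists 0, 0. intros s y. simpl. unfold dx.
      rewrite (Derive_ext _ (fun _ => c' + d' * s)) by (intros; apply H).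
      rewrite Derive_const. ring.
Qed.

Lemma smooth2_aff c d : smooth2 (fun s y => c + d * s).
Proof.
  intros l. destruct (pd_aff c d l) as [c' [d' H]]. split.
  - intros t x. split.
    + apply (ex_derive_ext (fun s => c' + d' * s)). intros; symmetry; apply H. auto_derive; trivial.
    + apply (ex_derive_ext (fun _ => c' + d' * t)). intros; symmetry; apply H. apply exd_const.
  - intros t x.
    apply (continuous_ext (fun p : R * R => c' + d' * fst p)). intros p; symmetry; apply H.
    apply (continuous_plus (U:=prod_UniformSpace R_UniformSpace R_UniformSpace) (K:=R_AbsRing) (V:=R_NormedModule) (fun _ => c') (fun p : R * R => d' * fst p)).
    apply continuous_const.
    apply (continuous_mult (U:=prod_UniformSpace R_UniformSpace R_UniformSpace) (K:=R_AbsRing) (fun _ => d') (fun p : R * R => fst p)).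
    apply continuous_const. apply continuous_fst.
Qed.

Lemma aff_dt c d t x : dt (fun s y => c + d * s) t x = d.
Proof. unfold dt. apply is_derive_unique. auto_derive; trivial. ring. Qed.
Lemma aff_dx c d t x : dx (fun s y => c + d * s) t x = 0.
Proof. unfold dx. apply Derive_const. Qed.
Lemma aff_dxx c d t x : dx (dx (fun s y => c + d * s)) t x = 0.
Proof. unfold dx at 1. rewrite (Derive_ext _ (fun _ => 0)) by (intros; apply aff_dx). apply Derive_const. Qed.

Lemma sym_iff V chi sig rho : smooth1 chi -> smooth1 sig -> smooth1 rho ->
  (gV V (GMI chi sig rho) <-> forall t x, condp V chi sig rho t x).
Proof.
  intros Hc Hs Hr. unfold gV. rewrite Lie_alt. split.
  - intros H t0 x0.
    set (a0 := Re (V t0 x0)). set (b0 := Im (V t0 x0)).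
    set (U0 := fun s y : R => (1 + b0 * t0) + (- b0) * s).
    set (W0 := fun s y : R => (- a0 * t0) + a0 * s).
    assert (HU0 : smooth2 U0) by apply smooth2_aff.
    assert (HW0 : smooth2 W0) by apply smooth2_aff.
    assert (E1 : - dt W0 t0 x0 + dx (dx U0) t0 x0 + Re (V t0 x0) * U0 t0 x0 - Im (V t0 x0) * W0 t0 x0 = 0).
    { unfold U0, W0. rewrite aff_dt, aff_dxx. fold a0 b0. ring. }
    assert (E2 : dt U0 t0 x0 + dx (dx W0) t0 x0 + Re (V t0 x0) * W0 t0 x0 + Im (V t0 x0) * U0 t0 x0 = 0).
    { unfold U0, W0. rewrite aff_dt, aff_dxx. fold a0 b0. ring. }
    destruct (H U0 W0 HU0 HW0 t0 x0 E1 E2) as [L1 L2].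
    destruct (LHS_resid V chi sig rho U0 W0 t0 x0 Hc Hs Hr HU0 HW0 E1 E2) as [R1 R2].
    rewrite R1 in L1. rewrite R2 in L2.
    assert (HU1 : U0 t0 x0 = 1) by (unfold U0; ring).
    assert (HW1 : W0 t0 x0 = 0) by (unfold W0; ring).
    rewrite HU1, HW1 in L1, L2. unfold condp. split; lra.
  - intros H U W HU HW t x E1 E2.
    destruct (LHS_resid V chi sig rho U W t x Hc Hs Hr HU HW E1 E2) as [R1 R2].
    destruct (H t x) as [C1 C2].
    rewrite R1, R2, C1, C2. split; ring.
Qed.


Lemma vf_eq (P Q : VF) :
  (forall t x u v, c_t P t x u v = c_t Q t x u v) ->
  (forall t x u v, c_x P t x u v = c_x Q t x u v) ->
  (forall t x u v, c_u P t x u v = c_u Q t x u v) ->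
  (forall t x u v, c_v P t x u v = c_v Q t x u v) -> P = Q.
Proof.
  destruct P, Q; simpl. intros H1 H2 H3 H4. f_equal;
  repeat (apply functional_extensionality; intro); auto.
Qed.

Lemma GMI_ct chi sig rho t x u v : c_t (GMI chi sig rho) t x u v = 0.
Proof. unfold GMI, Gop, sigM, rhoI, vf_add, vf_fmul, Mvf, Ivf, d_x; simpl. ring. Qed.
Lemma GMI_cx chi sig rho t x u v : c_x (GMI chi sig rho) t x u v = chi t.
Proof. unfold GMI, Gop, sigM, rhoI, vf_add, vf_fmul, Mvf, Ivf, d_x; simpl. ring. Qed.
Lemma GMI_cu chi sig rho t x u v : c_u (GMI chi sig rho) t x u v = - (/ 2 * Derive chi t * x + sig t) * v + rho t * u.
Proof. unfold GMI, Gop, sigM, rhoI, vf_add, vf_fmul, Mvf, Ivf, d_x; simpl. ring. Qed.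
Lemma GMI_cv chi sig rho t x u v : c_v (GMI chi sig rho) t x u v = (/ 2 * Derive chi t * x + sig t) * u + rho t * v.
Proof. unfold GMI, Gop, sigM, rhoI, vf_add, vf_fmul, Mvf, Ivf, d_x; simpl. ring. Qed.

Lemma GMI_zero chi sig rho : GMI chi sig rho = vf0 -> forall t, chi t = 0 /\ sig t = 0 /\ rho t = 0.
Proof.
  intros H t.
  assert (Hx := f_equal (fun Q => c_x Q t 0 0 0) H). cbv beta in Hx. rewrite GMI_cx in Hx. simpl in Hx.
  assert (Hu1 := f_equal (fun Q => c_u Q t 0 1 0) H). cbv beta in Hu1. rewrite GMI_cu in Hu1. simpl in Hu1.
  assert (Hu2 := f_equal (fun Q => c_u Q t 0 0 1) H). cbv beta in Hu2. rewrite GMI_cu in Hu2. simpl in Hu2.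
  split; [exact Hx|]. split; lra.
Qed.

Fixpoint lsum (c : nat -> R) (f : nat -> R -> R) (n : nat) (t : R) : R :=
  match n with O => 0 | S n => lsum c f n t + c n * f n t end.

Lemma lsum_exd c f n : (forall i t, ex_derive (f i) t) -> forall t,
  ex_derive (lsum c f n) t /\ Derive (lsum c f n) t = lsum c (fun i => Derive (f i)) n t.
Proof.
  intros Hf. induction n; intros t.
  - simpl. split. apply exd_const. apply Derive_const.
  - destruct (IHn t) as [H1 H2].
    assert (Hd : is_derive (lsum c f (S n)) t (Derive (lsum c f n) t + c n * Derive (f n) t)).
    { apply (isd_plus (lsum c f n) (fun t => c n * f n t)). apply Derive_correct; auto.
      apply isd_scal. apply Derive_correct; auto. }
    split. eexists; exact Hd.
    rewrite (is_derive_unique _ _ _ Hd). rewrite H2. reflexivity.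
Qed.

Lemma lincomb_GMI c chis sigs rhos n : (forall i t, ex_derive (chis i) t) ->
  lincomb c (fun i => GMI (chis i) (sigs i) (rhos i)) n = GMI (lsum c chis n) (lsum c sigs n) (lsum c rhos n).
Proof.
  intros Hd. induction n.
  - change (lincomb c (fun i => GMI (chis i) (sigs i) (rhos i)) 0) with vf0.
    apply vf_eq; intros t x u v;
      rewrite ?GMI_ct, ?GMI_cx, ?GMI_cu, ?GMI_cv; try rewrite (proj2 (lsum_exd c chis 0 Hd t));
      unfold vf0; simpl; ring.
  - simpl. rewrite IHn. apply vf_eq; intros t x u v.
    + unfold vf_add, vf_scal, vf_fmul. cbn [c_t]. rewrite !GMI_ct. ring.
    + unfold vf_add, vf_scal, vf_fmul. cbn [c_x]. rewrite !GMI_cx. simpl. ring.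
    + unfold vf_add, vf_scal, vf_fmul. cbn [c_u]. rewrite !GMI_cu.
      destruct (lsum_exd c chis (S n) Hd t) as [_ E]. simpl in E. rewrite E.
      destruct (lsum_exd c chis n Hd t) as [_ E']. rewrite E'. ring.
    + unfold vf_add, vf_scal, vf_fmul. cbn [c_v]. rewrite !GMI_cv.
      destruct (lsum_exd c chis (S n) Hd t) as [_ E]. simpl in E. rewrite E.
      destruct (lsum_exd c chis n Hd t) as [_ E']. rewrite E'. ring.
Qed.

Lemma DD_const c t : Derive (Derive (fun _ : R => c)) t = 0.
Proof. rewrite (Derive_ext _ (fun _ => 0)) by (intros; apply Derive_const). apply Derive_const. Qed.

Lemma Dop0 (Q : VF) : vf_add (Dop (fun _ => 0)) Q = Q.
Proof.
  assert (E2 : forall t, Derive_n (fun _ : R => 0) 2 t = 0) by (intros; apply (Derive_n_const 1 0)).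
  apply vf_eq; intros t x u v; unfold Dop, vf_add, vf_fmul, d_t, d_x, Mvf; cbn [c_t c_x c_u c_v];
    rewrite ?Derive_const, ?E2; ring.
Qed.

Lemma const_of_zero_der (f : R -> R) : (forall t, is_derive f t 0) -> forall t, f t = f 0.
Proof.
  intros H t. destruct (MVT_abs f (fun _ => 0) 0 t) as [c [Hc _]].
  { intros c _. apply is_derive_Reals. apply H. }
  rewrite Rabs_R0, Rmult_0_l in Hc. apply Rabs_eq_0 in Hc. lra.
Qed.

Definition Pset (V : R -> R -> C) (Q : VF) : Prop := gV_ess V Q /\ in_GMI_span Q.

Lemma Pset_iff V Q : Pset V Q <-> exists chi sig rho, smooth1 chi /\ smooth1 sig /\ smooth1 rho /\
  Q = GMI chi sig rho /\ forall t x, condp V chi sig rho t x.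
Proof.
  split.
  - intros [[HgV _] [chi [sig [rho [Hc [Hs [Hr EQ]]]]]]].
    exists chi, sig, rho. split; [auto|split; [auto|split; [auto|split]]].
    exact EQ. subst Q. apply (sym_iff V chi sig rho Hc Hs Hr). exact HgV.
  - intros [chi [sig [rho [Hc [Hs [Hr [EQ Hcond]]]]]]]. subst Q.
    split; [split|].
    + apply (sym_iff V chi sig rho Hc Hs Hr). exact Hcond.
    + exists (fun _ => 0), chi, sig, rho. split; [apply smooth1_const|].
      split; [auto|split; [auto|split; [auto|]]]. symmetry. apply Dop0.
    + exists chi, sig, rho. auto.
Qed.

Definition ax (V : R -> R -> C) t x := dx (fun t x => Re (V t x)) t x.
Definition bx (V : R -> R -> C) t x := dx (fun t x => Im (V t x)) t x.
Definition qV (V : R -> R -> C) t := 2 * (ax V t 1 - ax V t 0).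

Lemma smooth_ax V x0 : smooth2 (fun t x => Re (V t x)) -> smooth1 (fun t => ax V t x0).
Proof. intros H. exact (smooth2_t _ (false :: nil) x0 H). Qed.
Lemma smooth_bx V x0 : smooth2 (fun t x => Im (V t x)) -> smooth1 (fun t => bx V t x0).
Proof. intros H. exact (smooth2_t _ (false :: nil) x0 H). Qed.
Lemma smooth_qV V : smooth2 (fun t x => Re (V t x)) -> smooth1 (qV V).
Proof. intros H. unfold qV. apply smooth1_scal, smooth1_minus; apply smooth_ax; auto. Qed.

Lemma cond_ode V chi sig rho : (forall t x, condp V chi sig rho t x) ->
  forall t, Derive (Derive chi) t = qV V t * chi t.
Proof.
  intros H t. destruct (H t 1) as [H1 _]. destruct (H t 0) as [H0 _].
  fold (ax V t 1) in H1. fold (ax V t 0) in H0. unfold qV. nra.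
Qed.
Lemma cond_sig V chi sig rho : (forall t x, condp V chi sig rho t x) ->
  forall t, Derive sig t = chi t * ax V t 0.
Proof. intros H t. destruct (H t 0) as [H0 _]. unfold ax. lra. Qed.
Lemma cond_rho V chi sig rho : (forall t x, condp V chi sig rho t x) ->
  forall t, Derive rho t = - (chi t * bx V t 0).
Proof. intros H t. destruct (H t 0) as [_ H0]. unfold bx. lra. Qed.

Lemma sym_ode V chi sig rho : smooth1 chi -> (forall t x, condp V chi sig rho t x) ->
  (forall t, is_derive chi t (Derive chi t)) /\ (forall t, is_derive (Derive chi) t (qV V t * chi t)).
Proof.
  intros Hc H. split; intros t.
  - apply Derive_correct. apply smooth1_ex_derive; auto.
  - rewrite <- (cond_ode V chi sig rho H t). apply Derive_correct.
    apply smooth1_ex_derive, smooth1_Derive; auto.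
Qed.

Definition AF (V : R -> R -> C) : Prop :=
  forall t x, ax V t x = ax V t 0 + (ax V t 1 - ax V t 0) * x /\ bx V t x = bx V t 0.

Lemma cont_of_smooth f t : smooth1 f -> continuity_pt f t.
Proof. intros H. apply continuity_pt_filterlim. apply smooth1_continuous; auto. Qed.

Lemma locally_zero (chi : R -> R) t1 (eps : posreal) :
  (forall y, Rabs (y - t1) < eps -> chi y = 0) -> chi t1 = 0 /\ Derive chi t1 = 0.
Proof.
  intros H. split.
  - apply H. rewrite Rminus_diag, Rabs_R0. apply cond_pos.
  - apply is_derive_unique. apply (is_derive_ext_loc (fun _ => 0) chi t1 0).
    + exists eps. intros y Hy. symmetry. apply H. exact Hy.
    + apply isd_const.
Qed.

Lemma chi_zero V chi sig rho : smooth2 (fun t x => Re (V t x)) -> smooth2 (fun t x => Im (V t x)) ->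
  ~ AF V -> smooth1 chi -> (forall t x, condp V chi sig rho t x) -> forall t, chi t = 0.
Proof.
  intros HVr HVi HAF Hc H.
  assert (Hex : exists t1 x1, ~ (ax V t1 x1 = ax V t1 0 + (ax V t1 1 - ax V t1 0) * x1 /\ bx V t1 x1 = bx V t1 0)).
  { apply NNPP. intros Hn. apply HAF. intros t x. apply NNPP. intros Hn2. apply Hn. exists t, x. exact Hn2. }
  destruct Hex as [t1 [x1 Hn]].
  assert (Hloc : exists eps : posreal, forall y, Rabs (y - t1) < eps -> chi y = 0).
  { apply not_and_or in Hn. destruct Hn as [Hn|Hn].
    - set (g := fun t => ax V t x1 - ax V t 0 - (ax V t 1 - ax V t 0) * x1).
      assert (Hg : continuity_pt g t1).
      { apply cont_of_smooth. unfold g. apply smooth1_minus; [apply smooth1_minus|apply smooth1_mult].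
        apply smooth_ax; auto. apply smooth_ax; auto.
        apply smooth1_minus; apply smooth_ax; auto. apply smooth1_const. }
      destruct (continuous_neq_0 g t1 Hg) as [eps Heps].
      { unfold g. intros E. apply Hn. lra. }
      exists eps. intros y Hy.
      assert (Hgy : g y <> 0) by (replace y with (t1 + (y - t1)) by ring; apply Heps; exact Hy).
      destruct (H y x1) as [C1 _]. destruct (H y 0) as [C0 _]. destruct (H y 1) as [C2 _].
      fold (ax V y x1) in C1. fold (ax V y 0) in C0. fold (ax V y 1) in C2.
      assert (H0 : chi y * g y = 0).
      { unfold g. replace (chi y * (ax V y x1 - ax V y 0 - (ax V y 1 - ax V y 0) * x1)) with
          (chi y * ax V y x1 - chi y * ax V y 0 - (chi y * ax V y 1 - chi y * ax V y 0) * x1) by ring.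
        rewrite C1, C0, C2. ring. }
      apply Rmult_integral in H0. destruct H0; [auto|contradiction].
    - set (g := fun t => bx V t x1 - bx V t 0).
      assert (Hg : continuity_pt g t1).
      { apply cont_of_smooth. unfold g. apply smooth1_minus; apply smooth_bx; auto. }
      destruct (continuous_neq_0 g t1 Hg) as [eps Heps].
      { unfold g. intros E. apply Hn. lra. }
      exists eps. intros y Hy.
      assert (Hgy : g y <> 0) by (replace y with (t1 + (y - t1)) by ring; apply Heps; exact Hy).
      destruct (H y x1) as [_ C1]. destruct (H y 0) as [_ C0].
      fold (bx V y x1) in C1. fold (bx V y 0) in C0.
      assert (H0 : chi y * g y = 0).
      { unfold g. replace (chi y * (bx V y x1 - bx V y 0)) with (chi y * bx V y x1 - chi y * bx V y 0) by ring.
        rewrite C1, C0. ring. }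
      apply Rmult_integral in H0. destruct H0; [auto|contradiction]. }
  destruct Hloc as [eps Heps]. destruct (locally_zero chi t1 eps Heps) as [Z1 Z2].
  destruct (sym_ode V chi sig rho Hc H) as [D1 D2].
  apply (ode_uniq (qV V) chi (Derive chi) t1); auto.
  intros t. apply smooth1_continuous. apply smooth_qV; auto.
Qed.

Lemma cond_const V (c1 c2 : R) t x : condp V (fun _ => 0) (fun _ => c1) (fun _ => c2) t x.
Proof. unfold condp. rewrite DD_const, !Derive_const. split; ring. Qed.

Lemma GMI_eq chi sig rho chi' sig' rho' :
  (forall t, chi t = chi' t) -> (forall t, sig t = sig' t) -> (forall t, rho t = rho' t) ->
  GMI chi sig rho = GMI chi' sig' rho'.
Proof.
  intros H1 H2 H3.
  replace chi with chi' by (symmetry; apply functional_extensionality; auto).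
  replace sig with sig' by (symmetry; apply functional_extensionality; auto).
  replace rho with rho' by (symmetry; apply functional_extensionality; auto).
  reflexivity.
Qed.

Lemma dim2_case V : smooth2 (fun t x => Re (V t x)) -> smooth2 (fun t x => Im (V t x)) ->
  ~ AF V -> has_dim (Pset V) 2.
Proof.
  intros HVr HVi HAF.
  set (chis := fun (i : nat) (_ : R) => 0).
  set (sigs := fun (i : nat) (_ : R) => match i with O => 1 | _ => 0 end).
  set (rhos := fun (i : nat) (_ : R) => match i with 1%nat => 1 | _ => 0 end).
  assert (Hd : forall i t, ex_derive (chis i) t) by (intros; apply exd_const).
  exists (fun i => GMI (chis i) (sigs i) (rhos i)). split; [|split].
  - intros i Hi. apply Pset_iff. destruct i as [|[|i]]; [| |lia].
    + exists (fun _ => 0), (fun _ => 1), (fun _ => 0).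
      split; [apply smooth1_const|split; [apply smooth1_const|split; [apply smooth1_const|split; [reflexivity|]]]].
      intros t x; apply cond_const.
    + exists (fun _ => 0), (fun _ => 0), (fun _ => 1).
      split; [apply smooth1_const|split; [apply smooth1_const|split; [apply smooth1_const|split; [reflexivity|]]]].
      intros t x; apply cond_const.
  - intros c Hc. rewrite lincomb_GMI in Hc by exact Hd.
    pose proof (GMI_zero _ _ _ Hc 0) as [_ [S1 S2]]. simpl in S1, S2.
    intros i Hi. destruct i as [|[|i]]; [lra|lra|lia].
  - intros Q HQ. apply Pset_iff in HQ. destruct HQ as [chi [sig [rho [Hc [Hs [Hr [EQ Hcond]]]]]]].
    pose proof (chi_zero V chi sig rho HVr HVi HAF Hc Hcond) as H0.
    assert (Hsc : forall t, sig t = sig 0).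
    { apply const_of_zero_der. intros t. eapply isd_eq. apply Derive_correct, smooth1_ex_derive; auto.
      rewrite (cond_sig V chi sig rho Hcond t), H0. ring. }
    assert (Hrc : forall t, rho t = rho 0).
    { apply const_of_zero_der. intros t. eapply isd_eq. apply Derive_correct, smooth1_ex_derive; auto.
      rewrite (cond_rho V chi sig rho Hcond t), H0. ring. }
    exists (fun i => match i with O => sig 0 | _ => rho 0 end).
    rewrite lincomb_GMI by exact Hd. rewrite EQ. apply GMI_eq; intros t; simpl.
    + rewrite H0. unfold chis. ring.
    + rewrite Hsc. ring.
    + rewrite Hrc. ring.
Qed.

Lemma sol_props V c0 c1 : smooth2 (fun t x => Re (V t x)) ->
  smooth1 (ylim (qV V) c0 c1) /\
  (forall t, is_derive (ylim (qV V) c0 c1) t (zlim (qV V) c0 c1 t)) /\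
  (forall t, is_derive (zlim (qV V) c0 c1) t (qV V t * ylim (qV V) c0 c1 t)) /\
  (forall t, Derive (Derive (ylim (qV V) c0 c1)) t = qV V t * ylim (qV V) c0 c1 t) /\
  ylim (qV V) c0 c1 0 = c0 /\ zlim (qV V) c0 c1 0 = c1.
Proof.
  intros HVr. assert (Hq := smooth_qV V HVr).
  assert (Hqc : forall t, continuous (qV V) t) by (apply smooth1_continuous; auto).
  destruct (ode_exists (qV V) c0 c1 Hqc) as [HD [H0 H1]].
  assert (D1 : forall t, is_derive (ylim (qV V) c0 c1) t (zlim (qV V) c0 c1 t)) by (intros; apply HD).
  assert (D2 : forall t, is_derive (zlim (qV V) c0 c1) t (qV V t * ylim (qV V) c0 c1 t)) by (intros; apply HD).
  destruct (smooth_ode (qV V) _ _ Hq D1 D2) as [Sy Sz].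
  split; [auto|split; [auto|split; [auto|split; [|auto]]]].
  intros t. rewrite (Derive_ext _ (zlim (qV V) c0 c1)) by (intros; apply is_derive_unique; auto).
  apply is_derive_unique; auto.
Qed.

Definition sI V (y : R -> R) t := RInt (fun s => y s * ax V s 0) 0 t.
Definition rI V (y : R -> R) t := RInt (fun s => - (y s * bx V s 0)) 0 t.

Lemma sI_props V y : smooth2 (fun t x => Re (V t x)) -> smooth1 y ->
  smooth1 (sI V y) /\ (forall t, Derive (sI V y) t = y t * ax V t 0) /\ sI V y 0 = 0.
Proof.
  intros HVr Hy. assert (Hi : smooth1 (fun s => y s * ax V s 0)) by (apply smooth1_mult; auto; apply smooth_ax; auto).
  split; [apply smooth1_RInt; auto|split].
  - intros t. apply is_derive_unique. apply (RInt_isd (fun s => y s * ax V s 0)). apply smooth1_continuous; auto.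
  - unfold sI. rewrite RInt_point. reflexivity.
Qed.

Lemma rI_props V y : smooth2 (fun t x => Im (V t x)) -> smooth1 y ->
  smooth1 (rI V y) /\ (forall t, Derive (rI V y) t = - (y t * bx V t 0)) /\ rI V y 0 = 0.
Proof.
  intros HVi Hy. assert (Hi : smooth1 (fun s => - (y s * bx V s 0))) by (apply smooth1_opp, smooth1_mult; auto; apply smooth_bx; auto).
  split; [apply smooth1_RInt; auto|split].
  - intros t. apply is_derive_unique. apply (RInt_isd (fun s => - (y s * bx V s 0))). apply smooth1_continuous; auto.
  - unfold rI. rewrite RInt_point. reflexivity.
Qed.

Lemma sol_cond V y : smooth2 (fun t x => Re (V t x)) -> smooth2 (fun t x => Im (V t x)) -> AF V ->
  smooth1 y -> (forall t, Derive (Derive y) t = qV V t * y t) ->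
  forall t x, condp V y (sI V y) (rI V y) t x.
Proof.
  intros HVr HVi HAF Hy HDD t x.
  destruct (sI_props V y HVr Hy) as [_ [Ds _]]. destruct (rI_props V y HVi Hy) as [_ [Dr _]].
  destruct (HAF t x) as [A1 A2]. unfold condp. fold (ax V t x) (bx V t x).
  rewrite HDD, Ds, Dr, A1, A2. unfold qV. split; field.
Qed.



Lemma dim4_case V : smooth2 (fun t x => Re (V t x)) -> smooth2 (fun t x => Im (V t x)) ->
  AF V -> has_dim (Pset V) 4.
Proof.
  intros HVr HVi HAF.
  set (q := qV V).
  destruct (sol_props V 1 0 HVr) as [Sy1 [Dy1 [Dz1 [DD1 [Y10 Z10]]]]].
  destruct (sol_props V 0 1 HVr) as [Sy2 [Dy2 [Dz2 [DD2 [Y20 Z20]]]]].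
  set (y1 := ylim (qV V) 1 0) in *. set (z1 := zlim (qV V) 1 0) in *.
  set (y2 := ylim (qV V) 0 1) in *. set (z2 := zlim (qV V) 0 1) in *.
  destruct (sI_props V y1 HVr Sy1) as [Ss1 [Ds1 S10]].
  destruct (sI_props V y2 HVr Sy2) as [Ss2 [Ds2 S20]].
  destruct (rI_props V y1 HVi Sy1) as [Sr1 [Dr1 R10]].
  destruct (rI_props V y2 HVi Sy2) as [Sr2 [Dr2 R20]].
  set (chis := fun (i : nat) => match i with 2%nat => y1 | 3%nat => y2 | _ => fun _ : R => 0 end).
  set (sigs := fun (i : nat) => match i with O => (fun _ : R => 1) | 2%nat => sI V y1 | 3%nat => sI V y2 | _ => fun _ : R => 0 end).
  set (rhos := fun (i : nat) => match i with 1%nat => (fun _ : R => 1) | 2%nat => rI V y1 | 3%nat => rI V y2 | _ => fun _ : R => 0 end).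
  assert (Hd : forall i t, ex_derive (chis i) t).
  { intros i t. destruct i as [|[|[|[|i]]]].
    - exact (exd_const 0 t). - exact (exd_const 0 t).
    - exact (smooth1_ex_derive y1 Sy1 t). - exact (smooth1_ex_derive y2 Sy2 t). - exact (exd_const 0 t). }
  exists (fun i => GMI (chis i) (sigs i) (rhos i)). split; [|split].
  - intros i Hi. apply Pset_iff. destruct i as [|[|[|[|i]]]]; [| | | |lia].
    + exists (fun _ => 0), (fun _ => 1), (fun _ => 0).
      split; [apply smooth1_const|split; [apply smooth1_const|split; [apply smooth1_const|split; [reflexivity|]]]].
      intros t x; apply cond_const.
    + exists (fun _ => 0), (fun _ => 0), (fun _ => 1).
      split; [apply smooth1_const|split; [apply smooth1_const|split; [apply smooth1_const|split; [reflexivity|]]]].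
      intros t x; apply cond_const.
    + exists y1, (sI V y1), (rI V y1). split; [auto|split; [auto|split; [auto|split; [reflexivity|]]]].
      apply sol_cond; auto.
    + exists y2, (sI V y2), (rI V y2). split; [auto|split; [auto|split; [auto|split; [reflexivity|]]]].
      apply sol_cond; auto.
  - intros c Hc. rewrite lincomb_GMI in Hc by exact Hd.
    assert (HZ := GMI_zero _ _ _ Hc).
    destruct (HZ 0) as [C0 [S0 R0]]. cbn [lsum] in C0, S0, R0.
    unfold chis in C0. unfold sigs in S0. unfold rhos in R0. cbv beta iota in C0, S0, R0.
    rewrite Y10, Y20 in C0. rewrite S10, S20 in S0. rewrite R10, R20 in R0.
    assert (Hc2 : c 2%nat = 0) by lra.
    assert (Hder : Derive (lsum c chis 4) 0 = 0).
    { rewrite (Derive_ext _ (fun _ => 0)). apply Derive_const. intros t. apply (proj1 (HZ t)). }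
    rewrite (proj2 (lsum_exd c chis 4 Hd 0)) in Hder. cbn [lsum] in Hder.
    unfold chis in Hder. cbv beta iota in Hder.
    rewrite !Derive_const in Hder.
    rewrite (is_derive_unique _ _ _ (Dy1 0)), (is_derive_unique _ _ _ (Dy2 0)) in Hder.
    rewrite Z10, Z20 in Hder.
    assert (Hc3 : c 3%nat = 0) by lra.
    intros i Hi. destruct i as [|[|[|[|i]]]]; [lra|lra|lra|lra|lia].
  - intros Q HQ. apply Pset_iff in HQ. destruct HQ as [chi [sig [rho [Hc [Hs [Hr [EQ Hcond]]]]]]].
    destruct (sym_ode V chi sig rho Hc Hcond) as [Dc DDc].
    set (c2 := chi 0). set (c3 := Derive chi 0).
    assert (Hw : forall t, chi t - c2 * y1 t - c3 * y2 t = 0).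
    { apply (ode_uniq (qV V) (fun t => chi t - c2 * y1 t - c3 * y2 t)
                      (fun t => Derive chi t - c2 * z1 t - c3 * z2 t) 0).
      - intros t; apply smooth1_continuous, smooth_qV; auto.
      - intros t. apply isd_minus. apply isd_minus. apply Dc. apply isd_scal, Dy1. apply isd_scal, Dy2.
      - intros t. eapply isd_eq. apply isd_minus. apply isd_minus. apply DDc. apply isd_scal, Dz1. apply isd_scal, Dz2.
        ring.
      - unfold c2. rewrite Y10, Y20. ring.
      - unfold c3. rewrite Z10, Z20. ring. }
    assert (Hsc : forall t, sig t - c2 * sI V y1 t - c3 * sI V y2 t = sig 0 - c2 * sI V y1 0 - c3 * sI V y2 0).
    { apply (const_of_zero_der (fun t => sig t - c2 * sI V y1 t - c3 * sI V y2 t)). intros t.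
      eapply isd_eq. apply isd_minus. apply isd_minus.
      apply Derive_correct, smooth1_ex_derive; auto.
      apply isd_scal, Derive_correct, smooth1_ex_derive; auto.
      apply isd_scal, Derive_correct, smooth1_ex_derive; auto.
      rewrite (cond_sig V chi sig rho Hcond t), Ds1, Ds2.
      replace (chi t) with (c2 * y1 t + c3 * y2 t) by (pose proof (Hw t); lra). ring. }
    assert (Hrc : forall t, rho t - c2 * rI V y1 t - c3 * rI V y2 t = rho 0 - c2 * rI V y1 0 - c3 * rI V y2 0).
    { apply (const_of_zero_der (fun t => rho t - c2 * rI V y1 t - c3 * rI V y2 t)). intros t.
      eapply isd_eq. apply isd_minus. apply isd_minus.
      apply Derive_correct, smooth1_ex_derive; auto.
      apply isd_scal, Derive_correct, smooth1_ex_derive; auto.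
      apply isd_scal, Derive_correct, smooth1_ex_derive; auto.
      rewrite (cond_rho V chi sig rho Hcond t), Dr1, Dr2.
      replace (chi t) with (c2 * y1 t + c3 * y2 t) by (pose proof (Hw t); lra). ring. }
    rewrite S10, S20 in Hsc. rewrite R10, R20 in Hrc.
    exists (fun i => match i with O => sig 0 | 1%nat => rho 0 | 2%nat => c2 | _ => c3 end).
    rewrite lincomb_GMI by exact Hd. rewrite EQ. apply GMI_eq; intros t; cbn [lsum];
      unfold chis, sigs, rhos; cbv beta iota.
    + pose proof (Hw t). lra.
    + pose proof (Hsc t). lra.
    + pose proof (Hrc t). lra.
Qed.


Theorem lemma6 (V : R -> R -> C)
  (HVre : smooth2 (fun t x => Re (V t x)))
  (HVim : smooth2 (fun t x => Im (V t x))) :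
  exists k2 : nat, (k2 = 0%nat \/ k2 = 2%nat) /\
    has_dim (fun Q => gV_ess V Q /\ in_GMI_span Q) (k2 + 2).
Proof.
  destruct (classic (AF V)) as [H|H].
  - exists 2%nat. split; [right; reflexivity|]. exact (dim4_case V HVre HVim H).
  - exists 0%nat. split; [left; reflexivity|]. exact (dim2_case V HVre HVim H).
Qed.
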